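(* Let $\gamma_a,\gamma_s>0$, $\lambda\ge 0$, $q>0$, $\sigma_B>0$ and $\varepsilon_a\in(0,2)$. Let $\beta_a,\beta_s:\mathbb R\to\mathbb R$ be globally Lipschitz continuous with $\beta_a\ge 0$ and $\beta_s>0$, and set $\mathcal R_a(T_a)=q\beta_a(T_a)$, $\mathcal R_s(T_s)=q\beta_s(T_s)$. Let $T_a^{(0)}\ge 0$ and $T_s^{(0)}\ge 0$. Then the problem \[ \begin{cases} \gamma_a T_a'=-\lambda(T_a-T_s)+\varepsilon_a\sigma_B|T_s|^3T_s-2\varepsilon_a\sigma_B|T_a|^3T_a+\mathcal R_a(T_a),\\ \gamma_s T_s'=-\lambda(T_s-T_a)-\sigma_B|T_s|^3T_s+\varepsilon_a\sigma_B|T_a|^3T_a+\mathcal R_s(T_s),\\ T_a(0)=T_a^{(0)},\quad T_s(0)=T_s^{(0)} \end{cases} \] admits a unique solution, which is defined and bounded on $[0,+\infty)$. Moreover, $T_a(t)>0$ and $T_s(t)>0$ for every $t\in(0,+\infty)$. *)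

(* Defs.v *)
From Stdlib Require Import Reals.
From Coquelicot Require Import Coquelicot.
Open Scope R_scope.

Definition lipschitz (f : R -> R) : Prop :=
  exists L : R, 0 <= L /\ forall x y : R, Rabs (f x - f y) <= L * Rabs (x - y).

Definition rhs_a (lam eps sigB q : R) (beta_a : R -> R) (Ta Ts : R) : R :=
  - lam * (Ta - Ts) + eps * sigB * (Rabs Ts ^ 3 * Ts)
  - 2 * eps * sigB * (Rabs Ta ^ 3 * Ta) + q * beta_a Ta.

Definition rhs_s (lam eps sigB q : R) (beta_s : R -> R) (Ta Ts : R) : R :=
  - lam * (Ts - Ta) - sigB * (Rabs Ts ^ 3 * Ts)
  + eps * sigB * (Rabs Ta ^ 3 * Ta) + q * beta_s Ts.

Definition solution_on (ga gs lam eps sigB q : R) (beta_a beta_s : R -> R)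
    (Ta0 Ts0 T : R) (Ta Ts : R -> R) : Prop :=
  Ta 0 = Ta0 /\ Ts 0 = Ts0 /\
  filterlim Ta (at_right 0) (locally (Ta 0)) /\
  filterlim Ts (at_right 0) (locally (Ts 0)) /\
  (forall t, 0 < t < T ->
     is_derive Ta t ((rhs_a lam eps sigB q beta_a (Ta t) (Ts t)) / ga) /\
     is_derive Ts t ((rhs_s lam eps sigB q beta_s (Ta t) (Ts t)) / gs)).

(* Main.v *)
Require Import Defs.
From Stdlib Require Import Reals.
From Coquelicot Require Import Coquelicot.
From Stdlib Require Import Lra Lia Classical.
Open Scope R_scope.


Lemma lip_cont (f : R -> R) K x :
  (forall s t, Rabs (f s - f t) <= K * Rabs (s - t)) -> continuous f x.
Proof.
  intros H. apply continuity_pt_filterlim.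
  intros eps Heps. exists (eps / (Rabs K + 1)). split.
  { apply Rdiv_lt_0_compat; [lra| pose proof (Rabs_pos K); lra]. }
  intros y [_ Hy]. simpl in *. unfold R_dist in *.
  pose proof (H y x). pose proof (Rabs_pos K). pose proof (Rle_abs K).
  pose proof (Rabs_pos (y - x)).
  assert (Rabs (y - x) * (Rabs K + 1) < eps).
  { apply (Rmult_lt_compat_r (Rabs K + 1)) in Hy; [|lra].
    unfold Rdiv in Hy. rewrite Rmult_assoc, Rinv_l in Hy; lra. }
  nra.
Qed.

Definition Lip (f : R -> R) K := forall s t, Rabs (f s - f t) <= K * Rabs (s - t).

Definition GoodG (Ga Gs : R -> R -> R) (Fm L : R) :=
  0 <= Fm /\ 0 < L /\
  (forall x y, Rabs (Ga x y) <= Fm /\ Rabs (Gs x y) <= Fm) /\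
  (forall x y x' y', Rabs (Ga x y - Ga x' y') <= L * (Rabs (x - x') + Rabs (y - y')) /\
                     Rabs (Gs x y - Gs x' y') <= L * (Rabs (x - x') + Rabs (y - y'))).

Lemma comp_lip (G : R -> R -> R) L (f1 f2 : R -> R) K :
  (forall x y x' y', Rabs (G x y - G x' y') <= L * (Rabs (x - x') + Rabs (y - y'))) ->
  0 <= L -> Lip f1 K -> Lip f2 K -> Lip (fun u => G (f1 u) (f2 u)) (2 * L * K).
Proof.
  intros HG HL H1 H2 s t. eapply Rle_trans. apply HG.
  specialize (H1 s t). specialize (H2 s t). nra.
Qed.

Lemma ex_RInt_lip f K a b : Lip f K -> ex_RInt f a b.
Proof. intros H. apply (ex_RInt_continuous (V:=R_CompleteNormedModule)). intros. apply (lip_cont f K z H). Qed.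

Lemma pm_simp (A B : R) : A + B - A = B. Proof. ring. Qed.

Lemma rint_diff (h : R -> R) Fm s t :
  (forall a b, ex_RInt h a b) -> (forall u, Rabs (h u) <= Fm) ->
  Rabs (RInt h 0 t - RInt h 0 s) <= Fm * Rabs (t - s).
Proof.
  intros Hex Hb.
  assert (E : RInt h 0 t = RInt h 0 s + RInt h s t) by (symmetry; exact (RInt_Chasles (V:=R_CompleteNormedModule) h 0 s t (Hex _ _) (Hex _ _))).
  rewrite E, pm_simp.
  destruct (Rle_or_lt s t).
  - rewrite (Rabs_right (t - s)) by lra. rewrite Rmult_comm. apply abs_RInt_le_const; auto.
  - rewrite <- (opp_RInt_swap h t s) by auto. change (opp (RInt h t s)) with (- RInt h t s).
    rewrite Rabs_Ropp, (Rabs_left (t - s)) by lra.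
    replace (- (t - s)) with (s - t) by ring. rewrite Rmult_comm.
    apply abs_RInt_le_const; auto. lra.
Qed.

Fixpoint pic (Ga Gs : R -> R -> R) (a0 s0 : R) (n : nat) (t : R) : R * R :=
  match n with
  | O => (a0, s0)
  | S m => (a0 + RInt (fun u => Ga (fst (pic Ga Gs a0 s0 m u)) (snd (pic Ga Gs a0 s0 m u))) 0 t,
            s0 + RInt (fun u => Gs (fst (pic Ga Gs a0 s0 m u)) (snd (pic Ga Gs a0 s0 m u))) 0 t)
  end.

Lemma pic_lip Ga Gs Fm L a0 s0 : GoodG Ga Gs Fm L -> forall n,
  Lip (fun t => fst (pic Ga Gs a0 s0 n t)) Fm /\ Lip (fun t => snd (pic Ga Gs a0 s0 n t)) Fm.
Proof.
  intros [HF [HL [Hb Hl]]]. induction n as [|n [IH1 IH2]].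
  - split; intros s t; simpl; unfold Rminus; rewrite Rplus_opp_r, Rabs_R0;
      pose proof (Rabs_pos (s + - t)); nra.
  - split; intros s t; simpl.
    + replace (a0 + _ - _) with (RInt (fun u => Ga (fst (pic Ga Gs a0 s0 n u)) (snd (pic Ga Gs a0 s0 n u))) 0 s -
        RInt (fun u => Ga (fst (pic Ga Gs a0 s0 n u)) (snd (pic Ga Gs a0 s0 n u))) 0 t) by ring.
      apply rint_diff. intros; eapply ex_RInt_lip. apply (comp_lip Ga L _ _ Fm); [intros; apply Hl | lra | exact IH1 | exact IH2].
      intros; apply Hb.
    + replace (s0 + _ - _) with (RInt (fun u => Gs (fst (pic Ga Gs a0 s0 n u)) (snd (pic Ga Gs a0 s0 n u))) 0 s -
        RInt (fun u => Gs (fst (pic Ga Gs a0 s0 n u)) (snd (pic Ga Gs a0 s0 n u))) 0 t) by ring.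
      apply rint_diff. intros; eapply ex_RInt_lip. apply (comp_lip Gs L _ _ Fm); [intros; apply Hl | lra | exact IH1 | exact IH2].
      intros; apply Hb.
Qed.


Lemma pp_simp (A B C : R) : A + B - (A + C) = B - C. Proof. ring. Qed.

Lemma pic_S_fst Ga Gs a0 s0 n t : fst (pic Ga Gs a0 s0 (S n) t) =
  a0 + RInt (fun u => Ga (fst (pic Ga Gs a0 s0 n u)) (snd (pic Ga Gs a0 s0 n u))) 0 t.
Proof. reflexivity. Qed.
Lemma pic_S_snd Ga Gs a0 s0 n t : snd (pic Ga Gs a0 s0 (S n) t) =
  s0 + RInt (fun u => Gs (fst (pic Ga Gs a0 s0 n u)) (snd (pic Ga Gs a0 s0 n u))) 0 t.
Proof. reflexivity. Qed.

Lemma RInt_abs_le f g t : 0 <= t -> ex_RInt f 0 t -> ex_RInt g 0 t ->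
  (forall u, 0 <= u <= t -> Rabs (f u) <= g u) -> Rabs (RInt f 0 t) <= RInt g 0 t.
Proof.
  intros Ht Hf Hg H. eapply Rle_trans; [apply abs_RInt_le; auto|].
  apply RInt_le; auto. apply (ex_RInt_norm f). auto.
  intros; apply H; lra.
Qed.

Lemma RInt_cexp c k t : 0 < k -> RInt (fun u => c * exp (k * u)) 0 t = c * (exp (k * t) - 1) / k.
Proof.
  intros Hk. apply is_RInt_unique.
  replace (c * (exp (k * t) - 1) / k) with (minus (c * exp (k * t) / k) (c * exp (k * 0) / k))
    by (rewrite Rmult_0_r, exp_0; unfold minus, plus, opp; simpl; field; lra).
  apply (is_RInt_derive (fun u => c * exp (k * u) / k)).
  - intros x _. auto_derive. auto. field. lra.
  - intros x _. apply (ex_derive_continuous (fun u => c * exp (k * u))). auto_derive. auto.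
Qed.

Lemma hcomp_ex Ga Gs Fm L a0 s0 (G : R -> R -> R) n a b : GoodG Ga Gs Fm L ->
  (forall x y x' y', Rabs (G x y - G x' y') <= L * (Rabs (x - x') + Rabs (y - y'))) ->
  ex_RInt (fun u => G (fst (pic Ga Gs a0 s0 n u)) (snd (pic Ga Gs a0 s0 n u))) a b.
Proof.
  intros HG HGl. destruct (pic_lip Ga Gs Fm L a0 s0 HG n) as [H1 H2].
  destruct HG as [HF [HL _]].
  eapply ex_RInt_lip. apply (comp_lip G L _ _ Fm); [exact HGl | lra | exact H1 | exact H2].
Qed.

Lemma RInt_minus_R f g a b : ex_RInt f a b -> ex_RInt g a b ->
  RInt f a b - RInt g a b = RInt (fun u => f u - g u) a b.
Proof. intros. symmetry. exact (RInt_minus (V:=R_CompleteNormedModule) f g a b H H0). Qed.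

Lemma diff_bound Ga Gs Fm L a0 s0 : GoodG Ga Gs Fm L -> forall n t, 0 <= t ->
  Rabs (fst (pic Ga Gs a0 s0 (S n) t) - fst (pic Ga Gs a0 s0 n t)) +
  Rabs (snd (pic Ga Gs a0 s0 (S n) t) - snd (pic Ga Gs a0 s0 n t))
  <= Fm / (2 * L) * exp (4 * L * t) * (/ 2) ^ n.
Proof.
  intros HG. pose proof HG as [HF [HL [Hb Hl]]].
  assert (HlA : forall x y x' y', Rabs (Ga x y - Ga x' y') <= L * (Rabs (x - x') + Rabs (y - y'))) by (intros; apply Hl).
  assert (HlS : forall x y x' y', Rabs (Gs x y - Gs x' y') <= L * (Rabs (x - x') + Rabs (y - y'))) by (intros; apply Hl).
  induction n as [|n IH]; intros t Ht.
  - simpl. rewrite !pm_simp.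
    rewrite !RInt_const. unfold scal; simpl. unfold mult; simpl. rewrite Rminus_0_r, Rmult_1_r.
    rewrite !Rabs_mult, (Rabs_right t) by lra.
    pose proof (exp_ineq1_le (4 * L * t)). destruct (Hb a0 s0).
    assert (Fm / (2 * L) * (1 + 4 * L * t) <= Fm / (2 * L) * exp (4 * L * t)).
    { apply Rmult_le_compat_l; auto. apply Rle_mult_inv_pos; lra. }
    assert (Fm / (2 * L) * (1 + 4 * L * t) = Fm / (2 * L) + 2 * Fm * t) by (field; lra).
    assert (0 <= Fm / (2 * L)) by (apply Rle_mult_inv_pos; lra).
    nra.
  - set (B := Fm / (2 * L)).
    assert (HB : 0 <= B) by (apply Rle_mult_inv_pos; lra).
    assert (Hpt : forall u, 0 <= u <= t ->
      Rabs (fst (pic Ga Gs a0 s0 (S n) u) - fst (pic Ga Gs a0 s0 n u)) +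
      Rabs (snd (pic Ga Gs a0 s0 (S n) u) - snd (pic Ga Gs a0 s0 n u))
      <= B * (/ 2) ^ n * exp (4 * L * u)).
    { intros u Hu. rewrite Rmult_assoc, (Rmult_comm ((/2)^n)), <- Rmult_assoc. apply IH. lra. }
    assert (Hint : forall G : R -> R -> R,
      (forall x y x' y', Rabs (G x y - G x' y') <= L * (Rabs (x - x') + Rabs (y - y'))) ->
      Rabs (RInt (fun u => G (fst (pic Ga Gs a0 s0 (S n) u)) (snd (pic Ga Gs a0 s0 (S n) u))) 0 t -
            RInt (fun u => G (fst (pic Ga Gs a0 s0 n u)) (snd (pic Ga Gs a0 s0 n u))) 0 t)
      <= L * (B * (/ 2) ^ n) * (exp (4 * L * t) - 1) / (4 * L)).
    { intros G HGl. rewrite RInt_minus_R by (eapply hcomp_ex; eauto).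
      rewrite <- RInt_cexp by lra.
      apply RInt_abs_le; auto.
      - apply (ex_RInt_minus (V:=R_NormedModule)); eapply hcomp_ex; eauto.
      - apply (ex_RInt_continuous (V:=R_CompleteNormedModule)). intros z _.
        apply (ex_derive_continuous (fun u => L * (B * (/ 2) ^ n) * exp (4 * L * u))). auto_derive. auto.
      - intros u Hu. eapply Rle_trans. apply HGl.
        rewrite Rmult_assoc. apply Rmult_le_compat_l. lra. apply Hpt. auto. }
    rewrite (pic_S_fst Ga Gs a0 s0 (S n) t), (pic_S_fst Ga Gs a0 s0 n t), (pic_S_snd Ga Gs a0 s0 (S n) t), (pic_S_snd Ga Gs a0 s0 n t).
    rewrite !pp_simp.
    pose proof (Hint Ga HlA). pose proof (Hint Gs HlS).
    assert (L * (B * (/ 2) ^ n) * (exp (4 * L * t) - 1) / (4 * L) =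
            B * (/2) ^ n * (exp (4 * L * t) - 1) / 4) by (field; lra).
    simpl pow.
    assert (0 <= B * (/2)^n) by (apply Rmult_le_pos; [lra| apply pow_le; lra]).
    assert (0 < exp (4 * L * t)) by apply exp_pos.
    nra.
Qed.


Lemma exp_mono x y : x <= y -> exp x <= exp y.
Proof. intros [H|H]. left; apply exp_increasing; auto. subst; lra. Qed.

Lemma half_pow_pos n : 0 < (/2) ^ n.
Proof. apply pow_lt. lra. Qed.

Lemma cauchy_bound Ga Gs Fm L a0 s0 : GoodG Ga Gs Fm L -> forall n p t, 0 <= t ->
  Rabs (fst (pic Ga Gs a0 s0 (n + p) t) - fst (pic Ga Gs a0 s0 n t)) +
  Rabs (snd (pic Ga Gs a0 s0 (n + p) t) - snd (pic Ga Gs a0 s0 n t))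
  <= 2 * (Fm / (2 * L) * exp (4 * L * t)) * (/ 2) ^ n
     - 2 * (Fm / (2 * L) * exp (4 * L * t)) * (/ 2) ^ (n + p).
Proof.
  intros HG n p t Ht. induction p as [|p IH].
  - rewrite Nat.add_0_r. unfold Rminus. rewrite !Rplus_opp_r, Rabs_R0. lra.
  - rewrite Nat.add_succ_r.
    pose proof (diff_bound Ga Gs Fm L a0 s0 HG (n + p) t Ht).
    set (B := Fm / (2 * L) * exp (4 * L * t)) in *.
    simpl pow.
    pose proof (Rabs_triang (fst (pic Ga Gs a0 s0 (S (n + p)) t) - fst (pic Ga Gs a0 s0 (n + p) t))
                            (fst (pic Ga Gs a0 s0 (n + p) t) - fst (pic Ga Gs a0 s0 n t))).
    pose proof (Rabs_triang (snd (pic Ga Gs a0 s0 (S (n + p)) t) - snd (pic Ga Gs a0 s0 (n + p) t))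
                            (snd (pic Ga Gs a0 s0 (n + p) t) - snd (pic Ga Gs a0 s0 n t))).
    replace (fst (pic Ga Gs a0 s0 (S (n + p)) t) - fst (pic Ga Gs a0 s0 (n + p) t) +
        (fst (pic Ga Gs a0 s0 (n + p) t) - fst (pic Ga Gs a0 s0 n t))) with
        (fst (pic Ga Gs a0 s0 (S (n + p)) t) - fst (pic Ga Gs a0 s0 n t)) in H0 by ring.
    replace (snd (pic Ga Gs a0 s0 (S (n + p)) t) - snd (pic Ga Gs a0 s0 (n + p) t) +
        (snd (pic Ga Gs a0 s0 (n + p) t) - snd (pic Ga Gs a0 s0 n t))) with
        (snd (pic Ga Gs a0 s0 (S (n + p)) t) - snd (pic Ga Gs a0 s0 n t)) in H1 by ring.
    assert (E : 2 * B * (/ 2 * (/ 2) ^ (n + p)) = B * (/ 2) ^ (n + p)) by field.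
    lra.
Qed.

Definition Bnd Fm L t := Fm / (2 * L) * exp (4 * L * t).

Lemma Bnd_pos Fm L t : 0 <= Fm -> 0 < L -> 0 <= Bnd Fm L t.
Proof. intros. unfold Bnd. apply Rmult_le_pos. apply Rle_mult_inv_pos; lra. left; apply exp_pos. Qed.

Lemma cauchy_bound2 Ga Gs Fm L a0 s0 : GoodG Ga Gs Fm L -> forall n p t, 0 <= t ->
  Rabs (fst (pic Ga Gs a0 s0 (n + p) t) - fst (pic Ga Gs a0 s0 n t)) +
  Rabs (snd (pic Ga Gs a0 s0 (n + p) t) - snd (pic Ga Gs a0 s0 n t))
  <= 2 * Bnd Fm L t * (/ 2) ^ n.
Proof.
  intros. pose proof (cauchy_bound Ga Gs Fm L a0 s0 H n p t H0). unfold Bnd.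
  pose proof (half_pow_pos (n + p)). destruct H as [HF [HL _]].
  pose proof (Bnd_pos Fm L t HF HL). unfold Bnd in H. nra.
Qed.

Lemma geom_small eps : 0 < eps -> exists N, forall n, (N <= n)%nat -> (/2) ^ n < eps.
Proof.
  intros He. assert (H := is_lim_seq_geom (/2) ltac:(rewrite Rabs_right; lra)).
  apply is_lim_seq_spec in H. destruct (H (mkposreal eps He)) as [N HN].
  exists N. intros n Hn. specialize (HN n Hn). simpl in HN.
  rewrite Rminus_0_r, Rabs_right in HN; auto. left; apply half_pow_pos.
Qed.

Lemma pic_cauchy Ga Gs Fm L a0 s0 t : GoodG Ga Gs Fm L -> 0 <= t ->
  ex_finite_lim_seq (fun n => fst (pic Ga Gs a0 s0 n t)) /\
  ex_finite_lim_seq (fun n => snd (pic Ga Gs a0 s0 n t)).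
Proof.
  intros HG Ht. pose proof HG as [HF [HL _]]. pose proof (Bnd_pos Fm L t HF HL).
  assert (Hc : forall eps, 0 < eps -> exists N, forall n m, (N <= n)%nat -> (N <= m)%nat ->
     Rabs (fst (pic Ga Gs a0 s0 n t) - fst (pic Ga Gs a0 s0 m t)) +
     Rabs (snd (pic Ga Gs a0 s0 n t) - snd (pic Ga Gs a0 s0 m t)) < eps).
  { intros eps He.
    destruct (geom_small (eps / (2 * Bnd Fm L t + 1))) as [N HN].
    { apply Rdiv_lt_0_compat; lra. }
    exists N. intros n m Hn Hm.
    assert (Hk : forall k, (N <= k)%nat -> 2 * Bnd Fm L t * (/2) ^ k < eps).
    { intros k Hk. specialize (HN k Hk).
      apply (Rmult_lt_compat_l (2 * Bnd Fm L t + 1)) in HN; [|lra].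
      replace ((2 * Bnd Fm L t + 1) * (eps / (2 * Bnd Fm L t + 1))) with eps in HN by (field; lra).
      pose proof (half_pow_pos k). nra. }
    destruct (Nat.le_ge_cases n m) as [Hnm|Hnm].
    - replace m with (n + (m - n))%nat by lia.
      rewrite (Rabs_minus_sym (fst _)), (Rabs_minus_sym (snd _)).
      eapply Rle_lt_trans. apply (cauchy_bound2 Ga Gs Fm L a0 s0 HG); auto. apply Hk; auto.
    - replace n with (m + (n - m))%nat by lia.
      eapply Rle_lt_trans. apply (cauchy_bound2 Ga Gs Fm L a0 s0 HG); auto. apply Hk; auto. }
  split; apply ex_lim_seq_cauchy_corr; intros eps; destruct (Hc eps (cond_pos eps)) as [N HN];
    exists N; intros n m Hn Hm; specialize (HN n m Hn Hm);
    pose proof (Rabs_pos (fst (pic Ga Gs a0 s0 n t) - fst (pic Ga Gs a0 s0 m t)));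
    pose proof (Rabs_pos (snd (pic Ga Gs a0 s0 n t) - snd (pic Ga Gs a0 s0 m t))); lra.
Qed.


Definition Xa Ga Gs (a0 s0 : R) t := real (Lim_seq (fun n => fst (pic Ga Gs a0 s0 n (Rmax 0 t)))).
Definition Xs Ga Gs (a0 s0 : R) t := real (Lim_seq (fun n => snd (pic Ga Gs a0 s0 n (Rmax 0 t)))).

Lemma X_lim_gen Ga Gs Fm L a0 s0 t : GoodG Ga Gs Fm L ->
  is_lim_seq (fun n => fst (pic Ga Gs a0 s0 n (Rmax 0 t))) (Xa Ga Gs a0 s0 t) /\
  is_lim_seq (fun n => snd (pic Ga Gs a0 s0 n (Rmax 0 t))) (Xs Ga Gs a0 s0 t).
Proof.
  intros HG. destruct (pic_cauchy Ga Gs Fm L a0 s0 (Rmax 0 t) HG (Rmax_l 0 t)) as [H1 H2].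
  split; apply Lim_seq_correct'; auto.
Qed.

Lemma X_lim Ga Gs Fm L a0 s0 t : GoodG Ga Gs Fm L -> 0 <= t ->
  is_lim_seq (fun n => fst (pic Ga Gs a0 s0 n t)) (Xa Ga Gs a0 s0 t) /\
  is_lim_seq (fun n => snd (pic Ga Gs a0 s0 n t)) (Xs Ga Gs a0 s0 t).
Proof.
  intros HG Ht. pose proof (X_lim_gen Ga Gs Fm L a0 s0 t HG). rewrite Rmax_right in H by lra. auto.
Qed.

Lemma lim_abs_diff (u : nat -> R) (x l : R) : is_lim_seq u l ->
  is_lim_seq (fun n => Rabs (x - u n)) (Rabs (x - l)).
Proof.
  intros H. apply (is_lim_seq_abs _ (Finite (x - l))).
  apply is_lim_seq_minus'; auto. apply is_lim_seq_const.
Qed.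

Lemma X_tail Ga Gs Fm L a0 s0 n t : GoodG Ga Gs Fm L -> 0 <= t ->
  Rabs (fst (pic Ga Gs a0 s0 n t) - Xa Ga Gs a0 s0 t) +
  Rabs (snd (pic Ga Gs a0 s0 n t) - Xs Ga Gs a0 s0 t) <= 2 * Bnd Fm L t * (/ 2) ^ n.
Proof.
  intros HG Ht. destruct (X_lim Ga Gs Fm L a0 s0 t HG Ht) as [H1 H2].
  apply (is_lim_seq_incr_n _ n) in H1. apply (is_lim_seq_incr_n _ n) in H2.
  assert (Hl := is_lim_seq_plus' _ _ _ _ (lim_abs_diff _ (fst (pic Ga Gs a0 s0 n t)) _ H1)
                                        (lim_abs_diff _ (snd (pic Ga Gs a0 s0 n t)) _ H2)).
  refine (is_lim_seq_le _ _ _ _ _ Hl (is_lim_seq_const (2 * Bnd Fm L t * (/ 2) ^ n))).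
  intros p; cbv beta; rewrite (Nat.add_comm p n), (Rabs_minus_sym (fst _)), (Rabs_minus_sym (snd _)).
  apply (cauchy_bound2 Ga Gs Fm L a0 s0 HG n p t Ht).
Qed.

Lemma Rmax0_lip s t : Rabs (Rmax 0 s - Rmax 0 t) <= Rabs (s - t).
Proof. unfold Rmax. destruct (Rle_dec 0 s), (Rle_dec 0 t); unfold Rabs; repeat destruct Rcase_abs; lra. Qed.

Lemma X_lip Ga Gs Fm L a0 s0 : GoodG Ga Gs Fm L ->
  Lip (Xa Ga Gs a0 s0) Fm /\ Lip (Xs Ga Gs a0 s0) Fm.
Proof.
  intros HG. pose proof HG as [HF _].
  split; intros s t.
  - destruct (X_lim_gen Ga Gs Fm L a0 s0 s HG) as [Hs _].
    destruct (X_lim_gen Ga Gs Fm L a0 s0 t HG) as [Ht _].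
    assert (Hl := is_lim_seq_abs _ (Finite _) (is_lim_seq_minus' _ _ _ _ Hs Ht)).
    assert (Hle := is_lim_seq_le _ _ _ _ (fun n => proj1 (pic_lip Ga Gs Fm L a0 s0 HG n) (Rmax 0 s) (Rmax 0 t))
                     Hl (is_lim_seq_const (Fm * Rabs (Rmax 0 s - Rmax 0 t)))).
    simpl in Hle. pose proof (Rmax0_lip s t). pose proof (Rabs_pos (Rmax 0 s - Rmax 0 t)). nra.
  - destruct (X_lim_gen Ga Gs Fm L a0 s0 s HG) as [_ Hs].
    destruct (X_lim_gen Ga Gs Fm L a0 s0 t HG) as [_ Ht].
    assert (Hl := is_lim_seq_abs _ (Finite _) (is_lim_seq_minus' _ _ _ _ Hs Ht)).
    assert (Hle := is_lim_seq_le _ _ _ _ (fun n => proj2 (pic_lip Ga Gs Fm L a0 s0 HG n) (Rmax 0 s) (Rmax 0 t))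
                     Hl (is_lim_seq_const (Fm * Rabs (Rmax 0 s - Rmax 0 t)))).
    simpl in Hle. pose proof (Rmax0_lip s t). pose proof (Rabs_pos (Rmax 0 s - Rmax 0 t)). nra.
Qed.

Lemma zero_small z C : (forall n, Rabs z <= C * (/ 2) ^ n) -> z = 0.
Proof.
  intros H.
  assert (Hg := is_lim_seq_scal_l _ C _ (is_lim_seq_geom (/2) ltac:(rewrite Rabs_right; lra))).
  assert (Hle := is_lim_seq_le _ _ _ _ H (is_lim_seq_const (Rabs z)) Hg).
  simpl in Hle. rewrite Rmult_0_r in Hle. pose proof (Rabs_pos z).
  destruct (Req_dec z 0); auto. pose proof (Rabs_pos_lt z H1). lra.
Qed.

Lemma Bnd_mono Fm L u t : 0 <= Fm -> 0 < L -> u <= t -> Bnd Fm L u <= Bnd Fm L t.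
Proof.
  intros. unfold Bnd. apply Rmult_le_compat_l. apply Rle_mult_inv_pos; lra.
  apply exp_mono. nra.
Qed.

Lemma int_conv Ga Gs Fm L a0 s0 (G : R -> R -> R) n t : GoodG Ga Gs Fm L -> 0 <= t ->
  (forall x y x' y', Rabs (G x y - G x' y') <= L * (Rabs (x - x') + Rabs (y - y'))) ->
  Rabs (RInt (fun u => G (fst (pic Ga Gs a0 s0 n u)) (snd (pic Ga Gs a0 s0 n u))) 0 t -
        RInt (fun u => G (Xa Ga Gs a0 s0 u) (Xs Ga Gs a0 s0 u)) 0 t)
  <= t * (L * (2 * Bnd Fm L t * (/ 2) ^ n)).
Proof.
  intros HG Ht HGl. pose proof HG as [HF [HL _]].
  destruct (X_lip Ga Gs Fm L a0 s0 HG) as [Hxa Hxs].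
  assert (Hex : ex_RInt (fun u => G (Xa Ga Gs a0 s0 u) (Xs Ga Gs a0 s0 u)) 0 t).
  { eapply ex_RInt_lip. apply (comp_lip G L _ _ Fm); [exact HGl | lra | exact Hxa | exact Hxs]. }
  rewrite RInt_minus_R; [| eapply hcomp_ex; eauto | exact Hex].
  assert (E : t * (L * (2 * Bnd Fm L t * (/ 2) ^ n)) = (t - 0) * (L * (2 * Bnd Fm L t * (/ 2) ^ n))) by ring.
  rewrite E.
  apply abs_RInt_le_const; auto.
  - apply (ex_RInt_minus (V:=R_NormedModule)); [eapply hcomp_ex; eauto | exact Hex].
  - intros u Hu. eapply Rle_trans. apply HGl. apply Rmult_le_compat_l. lra.
    eapply Rle_trans. apply (X_tail Ga Gs Fm L a0 s0 n u HG). lra.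
    pose proof (half_pow_pos n). pose proof (Bnd_mono Fm L u t HF HL ltac:(lra)).
    nra.
Qed.

Lemma X_int Ga Gs Fm L a0 s0 t : GoodG Ga Gs Fm L -> 0 <= t ->
  Xa Ga Gs a0 s0 t = a0 + RInt (fun u => Ga (Xa Ga Gs a0 s0 u) (Xs Ga Gs a0 s0 u)) 0 t /\
  Xs Ga Gs a0 s0 t = s0 + RInt (fun u => Gs (Xa Ga Gs a0 s0 u) (Xs Ga Gs a0 s0 u)) 0 t.
Proof.
  intros HG Ht. pose proof HG as [HF [HL [Hb Hl]]].
  pose proof (Bnd_pos Fm L t HF HL).
  split.
  - assert (Xa Ga Gs a0 s0 t - a0 - RInt (fun u => Ga (Xa Ga Gs a0 s0 u) (Xs Ga Gs a0 s0 u)) 0 t = 0); [|lra].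
    apply (zero_small _ (2 * Bnd Fm L t + t * (L * (2 * Bnd Fm L t)))). intros n.
    pose proof (int_conv Ga Gs Fm L a0 s0 Ga n t HG Ht ltac:(intros; apply Hl)).
    pose proof (X_tail Ga Gs Fm L a0 s0 (S n) t HG Ht).
    rewrite pic_S_fst in H1. simpl pow in H1.
    pose proof (Rabs_pos (snd (pic Ga Gs a0 s0 (S n) t) - Xs Ga Gs a0 s0 t)).
    set (q := (/2)^n) in *. set (A := RInt (fun u => Ga (fst (pic Ga Gs a0 s0 n u)) (snd (pic Ga Gs a0 s0 n u))) 0 t) in *.
    set (B := RInt (fun u => Ga (Xa Ga Gs a0 s0 u) (Xs Ga Gs a0 s0 u)) 0 t) in *.
    set (X := Xa Ga Gs a0 s0 t) in *.
    pose proof (Rabs_triang (A - B) (-(a0 + A - X))) as H4.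
    replace (A - B + - (a0 + A - X)) with (X - a0 - B) in H4 by ring.
    rewrite Rabs_Ropp in H4.
    assert (0 <= q) by (left; apply half_pow_pos).
    assert (2 * Bnd Fm L t * (/2 * q) <= 2 * Bnd Fm L t * q) by nra.
    nra.
  - assert (Xs Ga Gs a0 s0 t - s0 - RInt (fun u => Gs (Xa Ga Gs a0 s0 u) (Xs Ga Gs a0 s0 u)) 0 t = 0); [|lra].
    apply (zero_small _ (2 * Bnd Fm L t + t * (L * (2 * Bnd Fm L t)))). intros n.
    pose proof (int_conv Ga Gs Fm L a0 s0 Gs n t HG Ht ltac:(intros; apply Hl)).
    pose proof (X_tail Ga Gs Fm L a0 s0 (S n) t HG Ht).
    rewrite pic_S_snd in H1. simpl pow in H1.
    pose proof (Rabs_pos (fst (pic Ga Gs a0 s0 (S n) t) - Xa Ga Gs a0 s0 t)).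
    set (q := (/2)^n) in *. set (A := RInt (fun u => Gs (fst (pic Ga Gs a0 s0 n u)) (snd (pic Ga Gs a0 s0 n u))) 0 t) in *.
    set (B := RInt (fun u => Gs (Xa Ga Gs a0 s0 u) (Xs Ga Gs a0 s0 u)) 0 t) in *.
    set (X := Xs Ga Gs a0 s0 t) in *.
    pose proof (Rabs_triang (A - B) (-(s0 + A - X))) as H4.
    replace (A - B + - (s0 + A - X)) with (X - s0 - B) in H4 by ring.
    rewrite Rabs_Ropp in H4.
    assert (0 <= q) by (left; apply half_pow_pos).
    assert (2 * Bnd Fm L t * (/2 * q) <= 2 * Bnd Fm L t * q) by nra.
    nra.
Qed.


Lemma deriv_from_int (f h : R -> R) c K t :
  (forall b, 0 <= b -> f b = c + RInt h 0 b) -> Lip h K -> 0 < t -> is_derive f t (h t).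
Proof.
  intros Hf Hh Ht.
  assert (Hd : is_derive (fun b => RInt h 0 b) t (h t)).
  { apply (is_derive_RInt (V:=R_CompleteNormedModule) h _ 0).
    - apply filter_forall. intros b. apply (RInt_correct (V:=R_CompleteNormedModule)). eapply ex_RInt_lip; eauto.
    - eapply lip_cont; eauto. }
  assert (Hd2 := is_derive_plus (fun _ => c) _ t zero (h t) (is_derive_const c t) Hd).
  rewrite plus_zero_l in Hd2.
  apply (is_derive_ext_loc (fun b => plus c (RInt h 0 b))); auto.
  exists (mkposreal t Ht). intros y Hy. symmetry. rewrite Hf. reflexivity.
  unfold ball in Hy; simpl in Hy. unfold AbsRing_ball, abs, minus, plus, opp in Hy; simpl in Hy.
  apply Rabs_def2 in Hy. lra.
Qed.

Lemma picard Ga Gs Fm L a0 s0 : GoodG Ga Gs Fm L ->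
  exists Ya Ys : R -> R, Ya 0 = a0 /\ Ys 0 = s0 /\ Lip Ya Fm /\ Lip Ys Fm /\
   forall t, 0 < t -> is_derive Ya t (Ga (Ya t) (Ys t)) /\ is_derive Ys t (Gs (Ya t) (Ys t)).
Proof.
  intros HG. pose proof HG as [HF [HL [Hb Hl]]].
  destruct (X_lip Ga Gs Fm L a0 s0 HG) as [Hxa Hxs].
  exists (Xa Ga Gs a0 s0), (Xs Ga Gs a0 s0).
  destruct (X_int Ga Gs Fm L a0 s0 0 HG ltac:(lra)) as [E1 E2].
  rewrite RInt_point in E1, E2. change zero with 0 in E1, E2. rewrite Rplus_0_r in E1, E2.
  split; [auto|split;[auto|split;[auto|split;[auto|]]]]. intros t Ht; split.
  - apply (deriv_from_int _ (fun u => Ga (Xa Ga Gs a0 s0 u) (Xs Ga Gs a0 s0 u)) a0 (2 * L * Fm)); auto.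
    intros b Hb0. apply (X_int Ga Gs Fm L a0 s0 b HG Hb0).
    apply (comp_lip Ga L _ _ Fm); [intros; apply Hl | lra | exact Hxa | exact Hxs].
  - apply (deriv_from_int _ (fun u => Gs (Xa Ga Gs a0 s0 u) (Xs Ga Gs a0 s0 u)) s0 (2 * L * Fm)); auto.
    intros b Hb0. apply (X_int Ga Gs Fm L a0 s0 b HG Hb0).
    apply (comp_lip Gs L _ _ Fm); [intros; apply Hl | lra | exact Hxa | exact Hxs].
Qed.


Lemma phi_pos x : 0 <= x -> Rabs x ^ 3 * x = x ^ 4.
Proof. intros. rewrite Rabs_right by lra. ring. Qed.

Lemma phi_neg x : x <= 0 -> Rabs x ^ 3 * x = - (- x) ^ 4.
Proof. intros. rewrite Rabs_left1 by lra. ring. Qed.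

Lemma pow4_le x K : 0 <= x <= K -> x ^ 4 <= K ^ 3 * x.
Proof.
  intros [H1 H2]. assert (x ^ 3 <= K ^ 3) by (apply pow_incr; lra).
  replace (x ^ 4) with (x ^ 3 * x) by ring. apply Rmult_le_compat_r; lra.
Qed.

Lemma pow4_lip x y K : 0 <= x <= K -> 0 <= y <= K ->
  Rabs (x ^ 4 - y ^ 4) <= 4 * K ^ 3 * Rabs (x - y).
Proof.
  intros Hx Hy.
  replace (x ^ 4 - y ^ 4) with ((x - y) * (x ^ 3 + x ^ 2 * y + x * y ^ 2 + y ^ 3)) by ring.
  rewrite Rabs_mult, Rmult_comm. apply Rmult_le_compat_r. apply Rabs_pos.
  assert (Hx3 : x ^ 3 <= K ^ 3) by (apply pow_incr; lra).
  assert (Hy3 : y ^ 3 <= K ^ 3) by (apply pow_incr; lra).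
  assert (Hx2 : x ^ 2 <= K ^ 2) by (apply pow_incr; lra).
  assert (Hy2 : y ^ 2 <= K ^ 2) by (apply pow_incr; lra).
  assert (x ^ 2 * y <= K ^ 2 * K) by (apply Rmult_le_compat; try lra; apply pow_le; lra).
  assert (x * y ^ 2 <= K * K ^ 2) by (apply Rmult_le_compat; try lra; apply pow_le; lra).
  assert (0 <= x ^ 2 * y) by (apply Rmult_le_pos; [apply pow_le|]; lra).
  assert (0 <= x * y ^ 2) by (apply Rmult_le_pos; [|apply pow_le]; lra).
  assert (0 <= x ^ 3) by (apply pow_le; lra). assert (0 <= y ^ 3) by (apply pow_le; lra).
  rewrite Rabs_right by lra. replace (K ^ 3) with (K ^ 2 * K) in * by ring. lra.
Qed.

Lemma phi_lip x y K : Rabs x <= K -> Rabs y <= K ->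
  Rabs (Rabs x ^ 3 * x - Rabs y ^ 3 * y) <= 4 * K ^ 3 * Rabs (x - y).
Proof.
  intros Hx Hy. pose proof (Rabs_pos x).
  destruct (Rle_or_lt 0 x) as [Px|Nx]; destruct (Rle_or_lt 0 y) as [Py|Ny].
  - rewrite !phi_pos by auto. apply pow4_lip.
    rewrite Rabs_right in Hx; lra. rewrite Rabs_right in Hy; lra.
  - rewrite phi_pos, phi_neg by lra. rewrite Rabs_right in Hx by lra. rewrite Rabs_left in Hy by lra.
    pose proof (pow4_le x K ltac:(lra)). pose proof (pow4_le (-y) K ltac:(lra)).
    assert (0 <= K ^ 3) by (apply pow_le; lra).
    pose proof (pow_le x 4 Px). pose proof (pow_le (-y) 4 ltac:(lra)).
    replace (x ^ 4 - - (- y) ^ 4) with (x ^ 4 + (- y) ^ 4) by ring.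
    rewrite (Rabs_right (x ^ 4 + (- y) ^ 4)) by lra. rewrite (Rabs_right (x - y)) by lra.
    assert (K ^ 3 * x + K ^ 3 * (- y) <= 4 * K ^ 3 * (x - y)) by nra. lra.
  - rewrite (phi_pos y), (phi_neg x) by lra. rewrite Rabs_right in Hy by lra. rewrite Rabs_left in Hx by lra.
    pose proof (pow4_le y K ltac:(lra)). pose proof (pow4_le (-x) K ltac:(lra)).
    assert (0 <= K ^ 3) by (apply pow_le; lra).
    pose proof (pow_le y 4 Py). pose proof (pow_le (-x) 4 ltac:(lra)).
    replace (- (- x) ^ 4 - y ^ 4) with (- ((- x) ^ 4 + y ^ 4)) by ring.
    rewrite Rabs_Ropp, (Rabs_right ((- x) ^ 4 + y ^ 4)) by lra. rewrite (Rabs_left (x - y)) by lra.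
    assert (K ^ 3 * y + K ^ 3 * (- x) <= 4 * K ^ 3 * (- (x - y))) by nra. lra.
  - rewrite !phi_neg by lra. rewrite Rabs_left in Hx, Hy by lra.
    replace (- (- x) ^ 4 - - (- y) ^ 4) with (- ((-x) ^ 4 - (-y) ^ 4)) by ring.
    rewrite Rabs_Ropp. replace (x - y) with (- (-x - -y)) by ring. rewrite Rabs_Ropp.
    apply pow4_lip; lra.
Qed.

Definition Lr lam sigB q La Ls K := 2 * lam + 24 * sigB * K ^ 3 + q * (La + Ls).

Lemma rhs_lip lam eps sigB q ba bs La Ls K u v u' v' :
  0 <= lam -> 0 < sigB -> 0 < eps < 2 -> 0 < q -> 0 <= La -> 0 <= Ls -> 0 <= K ->
  (forall x y, Rabs (ba x - ba y) <= La * Rabs (x - y)) ->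
  (forall x y, Rabs (bs x - bs y) <= Ls * Rabs (x - y)) ->
  Rabs u <= K -> Rabs v <= K -> Rabs u' <= K -> Rabs v' <= K ->
  Rabs (rhs_a lam eps sigB q ba u v - rhs_a lam eps sigB q ba u' v') <= Lr lam sigB q La Ls K * (Rabs (u - u') + Rabs (v - v')) /\
  Rabs (rhs_s lam eps sigB q bs u v - rhs_s lam eps sigB q bs u' v') <= Lr lam sigB q La Ls K * (Rabs (u - u') + Rabs (v - v')).
Proof.
  intros Hl Hs He Hq HLa HLs HK Hba Hbs Hu Hv Hu' Hv'.
  pose proof (phi_lip u u' K Hu Hu'). pose proof (phi_lip v v' K Hv Hv').
  pose proof (Hba u u'). pose proof (Hbs v v').
  assert (HK3 : 0 <= K ^ 3) by (apply pow_le; lra).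
  pose proof (Rabs_pos (u - u')). pose proof (Rabs_pos (v - v')).
  unfold rhs_a, rhs_s, Lr. split.
  - set (pu := Rabs u ^ 3 * u) in *. set (pu' := Rabs u' ^ 3 * u') in *.
    set (pv := Rabs v ^ 3 * v) in *. set (pv' := Rabs v' ^ 3 * v') in *.
    replace (- lam * (u - v) + eps * sigB * pv - 2 * eps * sigB * pu + q * ba u -
      (- lam * (u' - v') + eps * sigB * pv' - 2 * eps * sigB * pu' + q * ba u'))
      with (- lam * (u - u') + lam * (v - v') + eps * sigB * (pv - pv') - 2 * eps * sigB * (pu - pu') + q * (ba u - ba u')) by ring.
    eapply Rle_trans. apply Rabs_triang. eapply Rle_trans. apply Rplus_le_compat_r. apply Rabs_triang.
    eapply Rle_trans. apply Rplus_le_compat_r. apply Rplus_le_compat_r. apply Rabs_triang.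
    eapply Rle_trans. apply Rplus_le_compat_r. apply Rplus_le_compat_r. apply Rplus_le_compat_r. apply Rabs_triang.
    repeat (rewrite Rabs_mult || rewrite Rabs_Ropp).
    rewrite (Rabs_right lam), (Rabs_right eps), (Rabs_right sigB), (Rabs_right q), (Rabs_right 2) by lra.
    assert (0 <= eps * sigB) by nra.
    assert (eps * sigB * Rabs (pv - pv') <= eps * sigB * (4 * K ^ 3 * Rabs (v - v'))) by (apply Rmult_le_compat_l; lra).
    assert (2 * eps * sigB * Rabs (pu - pu') <= 2 * eps * sigB * (4 * K ^ 3 * Rabs (u - u'))) by (apply Rmult_le_compat_l; lra).
    assert (q * Rabs (ba u - ba u') <= q * (La * Rabs (u - u'))) by (apply Rmult_le_compat_l; lra).
    assert (eps * sigB * (4 * K ^ 3 * Rabs (v - v')) <= 8 * sigB * K^3 * Rabs (v - v')).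
    { assert (0 <= sigB * K ^ 3 * Rabs (v - v')) by (apply Rmult_le_pos; [apply Rmult_le_pos|]; lra). nra. }
    assert (2 * eps * sigB * (4 * K ^ 3 * Rabs (u - u')) <= 16 * sigB * K^3 * Rabs (u - u')).
    { assert (0 <= sigB * K ^ 3 * Rabs (u - u')) by (apply Rmult_le_pos; [apply Rmult_le_pos|]; lra). nra. }
    assert (0 <= sigB * K ^ 3 * Rabs (v - v')) by (apply Rmult_le_pos; [apply Rmult_le_pos|]; lra).
    assert (0 <= sigB * K ^ 3 * Rabs (u - u')) by (apply Rmult_le_pos; [apply Rmult_le_pos|]; lra).
    assert (0 <= q * Ls * Rabs (v - v')) by (apply Rmult_le_pos; [apply Rmult_le_pos|]; lra).
    assert (0 <= q * La * Rabs (v - v')) by (apply Rmult_le_pos; [apply Rmult_le_pos|]; lra).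
    assert (0 <= q * Ls * Rabs (u - u')) by (apply Rmult_le_pos; [apply Rmult_le_pos|]; lra).
    assert (0 <= lam * Rabs (v - v')) by (apply Rmult_le_pos; lra).
    assert (0 <= lam * Rabs (u - u')) by (apply Rmult_le_pos; lra).
    nra.
  - set (pu := Rabs u ^ 3 * u) in *. set (pu' := Rabs u' ^ 3 * u') in *.
    set (pv := Rabs v ^ 3 * v) in *. set (pv' := Rabs v' ^ 3 * v') in *.
    replace (- lam * (v - u) - sigB * pv + eps * sigB * pu + q * bs v -
      (- lam * (v' - u') - sigB * pv' + eps * sigB * pu' + q * bs v'))
      with (- lam * (v - v') + lam * (u - u') - sigB * (pv - pv') + eps * sigB * (pu - pu') + q * (bs v - bs v')) by ring.
    eapply Rle_trans. apply Rabs_triang. eapply Rle_trans. apply Rplus_le_compat_r. apply Rabs_triang.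
    eapply Rle_trans. apply Rplus_le_compat_r. apply Rplus_le_compat_r. apply Rabs_triang.
    eapply Rle_trans. apply Rplus_le_compat_r. apply Rplus_le_compat_r. apply Rplus_le_compat_r. apply Rabs_triang.
    repeat (rewrite Rabs_mult || rewrite Rabs_Ropp).
    rewrite (Rabs_right lam), (Rabs_right eps), (Rabs_right sigB), (Rabs_right q) by lra.
    assert (0 <= eps * sigB) by nra.
    assert (sigB * Rabs (pv - pv') <= sigB * (4 * K ^ 3 * Rabs (v - v'))) by (apply Rmult_le_compat_l; lra).
    assert (eps * sigB * Rabs (pu - pu') <= eps * sigB * (4 * K ^ 3 * Rabs (u - u'))) by (apply Rmult_le_compat_l; lra).
    assert (q * Rabs (bs v - bs v') <= q * (Ls * Rabs (v - v'))) by (apply Rmult_le_compat_l; lra).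
    assert (eps * sigB * (4 * K ^ 3 * Rabs (u - u')) <= 8 * sigB * K^3 * Rabs (u - u')).
    { assert (0 <= sigB * K ^ 3 * Rabs (u - u')) by (apply Rmult_le_pos; [apply Rmult_le_pos|]; lra). nra. }
    assert (0 <= sigB * K ^ 3 * Rabs (v - v')) by (apply Rmult_le_pos; [apply Rmult_le_pos|]; lra).
    assert (0 <= sigB * K ^ 3 * Rabs (u - u')) by (apply Rmult_le_pos; [apply Rmult_le_pos|]; lra).
    assert (0 <= q * La * Rabs (v - v')) by (apply Rmult_le_pos; [apply Rmult_le_pos|]; lra).
    assert (0 <= q * La * Rabs (u - u')) by (apply Rmult_le_pos; [apply Rmult_le_pos|]; lra).
    assert (0 <= q * Ls * Rabs (u - u')) by (apply Rmult_le_pos; [apply Rmult_le_pos|]; lra).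
    assert (0 <= lam * Rabs (v - v')) by (apply Rmult_le_pos; lra).
    assert (0 <= lam * Rabs (u - u')) by (apply Rmult_le_pos; lra).
    nra.
Qed.


Definition clamp M x := Rmin M (Rmax 0 x).

Lemma clamp_range M x : 0 <= M -> 0 <= clamp M x <= M.
Proof. intros. unfold clamp, Rmin, Rmax. repeat destruct Rle_dec; lra. Qed.

Lemma clamp_lip M x y : Rabs (clamp M x - clamp M y) <= Rabs (x - y).
Proof. unfold clamp, Rmin, Rmax. repeat destruct Rle_dec; unfold Rabs; repeat destruct Rcase_abs; lra. Qed.

Lemma clamp_id M x : 0 <= x <= M -> clamp M x = x.
Proof. intros. unfold clamp, Rmin, Rmax. repeat destruct Rle_dec; lra. Qed.

Lemma clamp_neg M x : 0 <= M -> x <= 0 -> clamp M x = 0.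
Proof. intros. unfold clamp, Rmin, Rmax. repeat destruct Rle_dec; lra. Qed.

Lemma clamp_nonneg M x : 0 <= x -> clamp M x = Rmin M x.
Proof. intros. unfold clamp. rewrite Rmax_right; auto. Qed.

Lemma tangent4 k y : 4 * k ^ 3 * y - 3 * k ^ 4 <= y ^ 4.
Proof.
  assert (y ^ 4 - (4 * k ^ 3 * y - 3 * k ^ 4) = (y - k) ^ 2 * ((y + k) ^ 2 + 2 * k ^ 2)) by ring.
  assert (0 <= (y - k) ^ 2 * ((y + k) ^ 2 + 2 * k ^ 2)).
  { apply Rmult_le_pos. apply pow2_ge_0. pose proof (pow2_ge_0 (y + k)); pose proof (pow2_ge_0 k); lra. }
  lra.
Qed.

Definition kk B kap := 1 + B / kap.
Definition R0 A B kap := 1 + B / kap + (A + 3 * kap * kk B kap ^ 4) / kap.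

Lemma quart_y B kap y : 0 <= B -> 0 < kap -> 0 <= y ->
  B * y - kap * y ^ 4 <= 3 * kap * kk B kap ^ 4.
Proof.
  intros HB Hk Hy. set (k := kk B kap).
  assert (Hk1 : 1 <= k) by (unfold k, kk; assert (0 <= B / kap) by (apply Rle_mult_inv_pos; lra); lra).
  assert (HBk : B <= kap * k) by (unfold k, kk; field_simplify; [lra|lra]).
  assert (k <= k ^ 3) by (replace (k ^ 3) with (k * (k * k)) by ring; nra).
  assert (kap * k <= kap * k ^ 3) by (apply Rmult_le_compat_l; lra).
  assert (0 <= kap * k ^ 3) by nra.
  assert (B * y <= 4 * kap * k ^ 3 * y) by (apply Rmult_le_compat_r; lra).
  pose proof (tangent4 k y). nra.
Qed.

Lemma quart_x A B kap x : 0 <= A -> 0 <= B -> 0 < kap -> R0 A B kap <= x ->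
  A + 3 * kap * kk B kap ^ 4 <= kap * x ^ 4 - B * x.
Proof.
  intros HA HB Hk Hx. set (k := kk B kap) in *. unfold R0 in Hx. fold k in Hx.
  assert (H1 : 0 <= B / kap) by (apply Rle_mult_inv_pos; lra).
  assert (H4 : 0 <= k ^ 4) by (apply pow_le; unfold k, kk; lra).
  assert (H2 : 0 <= (A + 3 * kap * k ^ 4) / kap) by (apply Rle_mult_inv_pos; nra).
  assert (Hx1 : 1 <= x) by lra.
  set (r := 1 + B / kap + (A + 3 * kap * k ^ 4) / kap) in *.
  assert (Hr : kap * r - B = kap + A + 3 * kap * k ^ 4) by (unfold r; field; lra).
  assert (x <= x ^ 3) by (replace (x ^ 3) with (x * (x * x)) by ring; nra).
  assert (kap * r * x <= kap * x ^ 4).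
  { replace (x ^ 4) with ((kap * x) * x ^ 3 / kap) by (field; lra). assert (r <= x ^ 3) by lra.
    assert (0 <= kap * x) by nra.
    replace (kap * r * x) with ((kap * x) * r) by ring.
    replace (kap * (kap * x * x ^ 3 / kap)) with ((kap * x) * x ^ 3) by (field; lra).
    apply Rmult_le_compat_l; lra. }
  assert (kap * r * x - B * x = (kap * r - B) * x) by ring.
  assert (0 <= kap * r - B) by (rewrite Hr; nra).
  assert (kap * r - B <= (kap * r - B) * x).
  { rewrite <- (Rmult_1_r (kap * r - B)) at 1. apply Rmult_le_compat_l; lra. }
  nra.
Qed.

Lemma quart_bound A B kap x y : 0 <= A -> 0 <= B -> 0 < kap -> 0 <= x -> 0 <= y ->
  (R0 A B kap <= x \/ R0 A B kap <= y) ->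
  A + B * (x + y) - kap * (x ^ 4 + y ^ 4) <= 0.
Proof.
  intros HA HB Hk Hx Hy [H|H].
  - pose proof (quart_x A B kap x HA HB Hk H). pose proof (quart_y B kap y HB Hk Hy). lra.
  - pose proof (quart_x A B kap y HA HB Hk H). pose proof (quart_y B kap x HB Hk Hx). lra.
Qed.

Lemma R0_ge1 A B kap : 0 <= A -> 0 <= B -> 0 < kap -> 1 <= R0 A B kap.
Proof.
  intros. unfold R0. assert (0 <= B / kap) by (apply Rle_mult_inv_pos; lra).
  assert (0 <= kk B kap ^ 4) by (apply pow_le; unfold kk; lra).
  assert (0 <= (A + 3 * kap * kk B kap ^ 4) / kap) by (apply Rle_mult_inv_pos; nra). lra.
Qed.


Lemma comb_bound lam eps sigB q (ba bs : R -> R) La Ls u v :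
  0 <= lam -> 0 < sigB -> 0 < eps < 2 -> 0 < q -> 0 <= La -> 0 <= Ls ->
  (forall x y, Rabs (ba x - ba y) <= La * Rabs (x - y)) ->
  (forall x y, Rabs (bs x - bs y) <= Ls * Rabs (x - y)) ->
  0 <= u -> 0 <= v ->
  rhs_a lam eps sigB q ba u v + (eps + 2) / 2 * rhs_s lam eps sigB q bs u v <=
  q * (ba 0 + (eps + 2) / 2 * bs 0) + (lam * eps / 2 + q * La + (eps + 2) / 2 * q * Ls) * (u + v)
  - (2 - eps) / 2 * sigB * eps / 2 * (u ^ 4 + v ^ 4).
Proof.
  intros Hl Hs He Hq HLa HLs Hba Hbs Hu Hv.
  unfold rhs_a, rhs_s. rewrite !phi_pos by lra.
  pose proof (Hba u 0). pose proof (Hbs v 0). rewrite !Rminus_0_r in H, H0.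
  rewrite (Rabs_right u), (Rabs_right v) in * by lra.
  pose proof (Rle_abs (ba u - ba 0)). pose proof (Rle_abs (bs v - bs 0)).
  assert (ba u <= ba 0 + La * u) by lra. assert (bs v <= bs 0 + Ls * v) by lra. clear H H0 H1 H2.
  assert (q * ba u <= q * (ba 0 + La * u)) by (apply Rmult_le_compat_l; lra).
  assert (q * bs v <= q * (bs 0 + Ls * v)) by (apply Rmult_le_compat_l; lra).
  assert (Hc : 0 < (eps + 2) / 2) by lra.
  assert ((eps + 2) / 2 * (q * bs v) <= (eps + 2) / 2 * (q * (bs 0 + Ls * v))) by (apply Rmult_le_compat_l; lra).
  pose proof (pow_le u 4 Hu). pose proof (pow_le v 4 Hv).
  assert (0 <= lam * eps * v) by (apply Rmult_le_pos; [apply Rmult_le_pos|]; lra).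
  assert ((2 - eps) / 2 * sigB * eps / 2 * v ^ 4 <= (2 - eps) / 2 * sigB * v ^ 4).
  { assert (0 <= (2 - eps) / 2 * sigB * v ^ 4) by (apply Rmult_le_pos; [apply Rmult_le_pos|]; lra). nra. }
  assert ((2 - eps) / 2 * sigB * eps / 2 * u ^ 4 <= (2 - eps) / 2 * sigB * eps * u ^ 4).
  { assert (0 <= (2 - eps) / 2 * sigB * eps * u ^ 4) by
      (apply Rmult_le_pos; [apply Rmult_le_pos; [apply Rmult_le_pos|]|]; lra). nra. }
  match goal with |- ?L <= _ => replace L with
    (lam * eps / 2 * (u - v) - (2 - eps) / 2 * sigB * v ^ 4 - (2 - eps) / 2 * sigB * eps * u ^ 4
     + q * ba u + (eps + 2) / 2 * (q * bs v)) by field end.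
  assert (0 <= q * La * v) by (apply Rmult_le_pos; [apply Rmult_le_pos|]; lra).
  assert (0 <= (eps + 2) / 2 * q * Ls * u) by (apply Rmult_le_pos; [apply Rmult_le_pos; [apply Rmult_le_pos|]|]; lra).
  lra.
Qed.

Lemma deriv_pos_contra f t l : is_derive f t l -> 0 < l -> 0 < t -> f t = 0 ->
  (forall s, 0 < s < t -> 0 <= f s) -> False.
Proof.
  intros Hd Hl Ht Hf Hpos. apply is_derive_Reals in Hd.
  destruct (Hd l Hl) as [del Hdel].
  set (h := - Rmin (del / 2) (t / 2)).
  assert (Hm : 0 < Rmin (del / 2) (t / 2)) by (apply Rmin_glb_lt; pose proof (cond_pos del); lra).
  pose proof (Rmin_l (del / 2) (t / 2)). pose proof (Rmin_r (del / 2) (t / 2)).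
  assert (Hh : h <> 0) by (unfold h; lra).
  assert (Hha : Rabs h < del) by (unfold h; rewrite Rabs_Ropp, Rabs_right; pose proof (cond_pos del); lra).
  specialize (Hdel h Hh Hha). rewrite Hf, Rminus_0_r in Hdel.
  apply Rabs_def2 in Hdel. destruct Hdel as [_ Hdel].
  assert (0 < f (t + h) / h) by lra.
  assert (0 <= f (t + h)) by (apply Hpos; unfold h; lra).
  assert (h < 0) by (unfold h; lra).
  assert (f (t + h) / h <= 0).
  { unfold Rdiv. assert (/ h < 0) by (apply Rinv_lt_0_compat; auto). nra. }
  lra.
Qed.

Definition rc (f : R -> R) t0 := forall eps, 0 < eps -> exists del, 0 < del /\
  forall t, t0 < t < t0 + del -> Rabs (f t - f t0) < eps.

Lemma lip_rc f K t0 : 0 <= K -> (forall s t, Rabs (f s - f t) <= K * Rabs (s - t)) -> rc f t0.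
Proof.
  intros HK H eps He. exists (eps / (K + 1)). split. apply Rdiv_lt_0_compat; lra.
  intros t Ht. eapply Rle_lt_trans. apply H.
  rewrite Rabs_right by lra.
  assert ((t - t0) * (K + 1) < eps).
  { destruct Ht as [_ Ht]. apply (Rmult_lt_compat_r (K + 1)) in Ht; [|lra].
    unfold Rdiv in Ht. replace ((t0 + eps * / (K + 1)) * (K + 1)) with (t0 * (K + 1) + eps) in Ht by (field; lra).
    lra. }
  nra.
Qed.

Lemma filterlim_rc f t0 : filterlim f (at_right t0) (locally (f t0)) -> rc f t0.
Proof.
  intros H0 eps He. pose proof (proj1 (filterlim_locally (F := at_right t0) (f : R -> R_UniformSpace) (f t0)) H0) as H. destruct (H (mkposreal eps He)) as [del Hdel].
  exists del. split. apply cond_pos. intros t Ht.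
  assert (Hb : ball t0 del t).
  { unfold ball; simpl. unfold AbsRing_ball, abs, minus, plus, opp; simpl.
    rewrite Rabs_right; lra. }
  specialize (Hdel t Hb ltac:(lra)). unfold ball in Hdel; simpl in Hdel.
  unfold AbsRing_ball, abs, minus, plus, opp in Hdel; simpl in Hdel. exact Hdel.
Qed.



Lemma deriv_contpt g t l : is_derive g t l -> continuity_pt g t.
Proof.
  intros H. apply continuity_pt_filterlim. apply (ex_derive_continuous g t).
  exists l. exact H.
Qed.

Lemma deriv_rc f t0 l : is_derive f t0 l -> rc f t0.
Proof.
  intros Hd eps He. apply deriv_contpt in Hd. destruct (Hd eps He) as [del [Hdel Hx]].
  exists del. split; auto. intros t Ht. apply (Hx t). split. split. exact I. lra.
  simpl. unfold R_dist. rewrite Rabs_right; lra.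
Qed.

Lemma rhs_a_0 lam eps sigB q (ba : R -> R) v : 0 <= lam -> 0 < sigB -> 0 < eps -> 0 < q ->
  0 <= ba 0 -> 0 <= v -> 0 <= rhs_a lam eps sigB q ba 0 v /\ (0 < v -> 0 < rhs_a lam eps sigB q ba 0 v).
Proof.
  intros. unfold rhs_a. rewrite !phi_pos by lra.
  assert (0 <= q * ba 0) by (apply Rmult_le_pos; lra).
  assert (0 <= lam * v) by (apply Rmult_le_pos; lra).
  split.
  - assert (0 <= eps * sigB * v ^ 4) by (apply Rmult_le_pos; [nra|apply pow_le; lra]). nra.
  - intros. assert (0 < eps * sigB * v ^ 4) by (apply Rmult_lt_0_compat; [nra|apply pow_lt; lra]). nra.
Qed.

Lemma rhs_s_0 lam eps sigB q (bs : R -> R) u : 0 <= lam -> 0 < sigB -> 0 < eps -> 0 < q ->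
  0 < bs 0 -> 0 <= u -> 0 < rhs_s lam eps sigB q bs u 0.
Proof.
  intros. unfold rhs_s. rewrite !phi_pos by lra.
  assert (0 < q * bs 0) by (apply Rmult_lt_0_compat; lra).
  assert (0 <= lam * u) by (apply Rmult_le_pos; lra).
  assert (0 <= eps * sigB * u ^ 4) by (apply Rmult_le_pos; [nra|apply pow_le; lra]). nra.
Qed.

Lemma Rabs_div_pos x g : 0 < g -> Rabs (x / g) = Rabs x / g.
Proof. intros. unfold Rdiv. rewrite Rabs_mult, Rabs_inv, (Rabs_right g); lra. Qed.

Lemma GoodG_trunc lam eps sigB q ba bs La Ls M ga gs :
  0 <= lam -> 0 < sigB -> 0 < eps < 2 -> 0 < q -> 0 <= La -> 0 <= Ls -> 0 <= M ->
  0 < ga -> 0 < gs ->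
  (forall x y, Rabs (ba x - ba y) <= La * Rabs (x - y)) ->
  (forall x y, Rabs (bs x - bs y) <= Ls * Rabs (x - y)) ->
  GoodG (fun x y => rhs_a lam eps sigB q ba (clamp M x) (clamp M y) / ga)
        (fun x y => rhs_s lam eps sigB q bs (clamp M x) (clamp M y) / gs)
        ((Rabs (rhs_a lam eps sigB q ba 0 0) + Rabs (rhs_s lam eps sigB q bs 0 0) + 2 * Lr lam sigB q La Ls M * M) * (/ ga + / gs))
        (Lr lam sigB q La Ls M * (/ ga + / gs) + 1).
Proof.
  intros Hl Hs He Hq HLa HLs HM Hga Hgs Hba Hbs.
  assert (HLr : 0 <= Lr lam sigB q La Ls M).
  { unfold Lr. assert (0 <= M ^ 3) by (apply pow_le; lra).
    assert (0 <= sigB * M ^ 3) by (apply Rmult_le_pos; lra).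
    assert (0 <= q * (La + Ls)) by (apply Rmult_le_pos; lra). lra. }
  assert (Hi1 : 0 < / ga) by (apply Rinv_0_lt_compat; lra).
  assert (Hi2 : 0 < / gs) by (apply Rinv_0_lt_compat; lra).
  assert (HM0 : Rabs 0 <= M) by (rewrite Rabs_R0; lra).
  assert (Hcl : forall x, Rabs (clamp M x) <= M).
  { intros x. destruct (clamp_range M x HM). rewrite Rabs_right; lra. }
  assert (HLi := fun u v u' v' => rhs_lip lam eps sigB q ba bs La Ls M u v u' v' Hl Hs He Hq HLa HLs HM Hba Hbs).
  assert (Hbnd : forall x y,
    Rabs (rhs_a lam eps sigB q ba (clamp M x) (clamp M y)) <=
      Rabs (rhs_a lam eps sigB q ba 0 0) + Rabs (rhs_s lam eps sigB q bs 0 0) + 2 * Lr lam sigB q La Ls M * M /\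
    Rabs (rhs_s lam eps sigB q bs (clamp M x) (clamp M y)) <=
      Rabs (rhs_a lam eps sigB q ba 0 0) + Rabs (rhs_s lam eps sigB q bs 0 0) + 2 * Lr lam sigB q La Ls M * M).
  { intros x y. destruct (HLi (clamp M x) (clamp M y) 0 0 (Hcl x) (Hcl y) HM0 HM0) as [H1 H2].
    rewrite !Rminus_0_r in H1, H2.
    assert (Lr lam sigB q La Ls M * (Rabs (clamp M x) + Rabs (clamp M y)) <= 2 * Lr lam sigB q La Ls M * M).
    { pose proof (Hcl x). pose proof (Hcl y). nra. }
    pose proof (Rabs_triang_inv (rhs_a lam eps sigB q ba (clamp M x) (clamp M y)) (rhs_a lam eps sigB q ba 0 0)).
    pose proof (Rabs_triang_inv (rhs_s lam eps sigB q bs (clamp M x) (clamp M y)) (rhs_s lam eps sigB q bs 0 0)).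
    pose proof (Rabs_pos (rhs_a lam eps sigB q ba 0 0)). pose proof (Rabs_pos (rhs_s lam eps sigB q bs 0 0)).
    split; lra. }
  set (F0 := Rabs (rhs_a lam eps sigB q ba 0 0) + Rabs (rhs_s lam eps sigB q bs 0 0) + 2 * Lr lam sigB q La Ls M * M) in *.
  assert (HF0 : 0 <= F0).
  { unfold F0. pose proof (Rabs_pos (rhs_a lam eps sigB q ba 0 0)). pose proof (Rabs_pos (rhs_s lam eps sigB q bs 0 0)).
    assert (0 <= Lr lam sigB q La Ls M * M) by (apply Rmult_le_pos; lra). lra. }
  split; [|split; [|split]].
  - apply Rmult_le_pos; lra.
  - assert (0 <= Lr lam sigB q La Ls M * (/ ga + / gs)) by (apply Rmult_le_pos; lra). lra.
  - intros x y. destruct (Hbnd x y) as [H1 H2]. rewrite !Rabs_div_pos by lra. unfold Rdiv. split.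
    + assert (F0 * / ga <= F0 * (/ ga + / gs)) by (apply Rmult_le_compat_l; lra).
      assert (Rabs (rhs_a lam eps sigB q ba (clamp M x) (clamp M y)) * / ga <= F0 * / ga) by (apply Rmult_le_compat_r; lra). lra.
    + assert (F0 * / gs <= F0 * (/ ga + / gs)) by (apply Rmult_le_compat_l; lra).
      assert (Rabs (rhs_s lam eps sigB q bs (clamp M x) (clamp M y)) * / gs <= F0 * / gs) by (apply Rmult_le_compat_r; lra). lra.
  - intros x y x' y'.
    destruct (HLi (clamp M x) (clamp M y) (clamp M x') (clamp M y') (Hcl x) (Hcl y) (Hcl x') (Hcl y')) as [H1 H2].
    pose proof (clamp_lip M x x'). pose proof (clamp_lip M y y').
    set (Lr0 := Lr lam sigB q La Ls M) in *.
    assert (Lr0 * (Rabs (clamp M x - clamp M x') + Rabs (clamp M y - clamp M y')) <= Lr0 * (Rabs (x - x') + Rabs (y - y'))) by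
      (apply Rmult_le_compat_l; lra).
    set (d := Rabs (x - x') + Rabs (y - y')) in *.
    assert (Hd : 0 <= d) by (unfold d; pose proof (Rabs_pos (x - x')); pose proof (Rabs_pos (y - y')); lra).
    assert (E1 : forall a b g, 0 < g -> a / g - b / g = (a - b) / g) by (intros; field; lra).
    rewrite !E1 by lra. rewrite !Rabs_div_pos by lra. unfold Rdiv.
    assert (Hlm : Lr0 * d * / ga <= (Lr0 * (/ ga + / gs) + 1) * d /\ Lr0 * d * / gs <= (Lr0 * (/ ga + / gs) + 1) * d).
    { assert (0 <= Lr0 * d * / gs) by (apply Rmult_le_pos; [apply Rmult_le_pos|]; lra).
      assert (0 <= Lr0 * d * / ga) by (apply Rmult_le_pos; [apply Rmult_le_pos|]; lra).
      split; nra. }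
    split.
    + assert (Rabs (rhs_a lam eps sigB q ba (clamp M x) (clamp M y) - rhs_a lam eps sigB q ba (clamp M x') (clamp M y')) * / ga <= Lr0 * d * / ga)
        by (apply Rmult_le_compat_r; lra). lra.
    + assert (Rabs (rhs_s lam eps sigB q bs (clamp M x) (clamp M y) - rhs_s lam eps sigB q bs (clamp M x') (clamp M y')) * / gs <= Lr0 * d * / gs)
        by (apply Rmult_le_compat_r; lra). lra.
Qed.


Lemma barrier (g dg : R -> R) (T : R) (Q : R -> Prop) :
  g 0 <= 0 ->
  (forall t0, 0 <= t0 < T -> forall eps, 0 < eps -> exists del, 0 < del /\
       forall t, t0 < t < t0 + del -> Rabs (g t - g t0) < eps) ->
  (forall t, 0 < t < T -> is_derive g t (dg t)) ->
  (forall t0, 0 <= t0 < T -> g t0 <= 0 -> exists del, 0 < del /\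
       forall t, t0 < t < t0 + del -> Q t) ->
  (forall t, 0 < t < T -> 0 < g t -> Q t -> dg t <= 0) ->
  forall t, 0 <= t < T -> g t <= 0.
Proof.
  intros H0 Hc Hd HQ Hneg t Ht.
  destruct (Rle_or_lt (g t) 0) as [|Hpos]; auto. exfalso.
  set (E := fun s => 0 <= s <= t /\ g s <= 0).
  destruct (completeness E) as [t0 [Hub Hlub]].
  { exists t. intros s [Hs _]. lra. }
  { exists 0. split; lra. }
  assert (Ht00 : 0 <= t0) by (apply Hub; split; lra).
  assert (Ht0t : t0 <= t) by (apply Hlub; intros s [Hs _]; lra).
  assert (Hg0 : g t0 <= 0).
  { destruct (Rle_or_lt (g t0) 0) as [|Hg]; auto. exfalso.
    assert (t0 <> 0) by (intro; subst; lra).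
    assert (Hder := Hd t0 ltac:(lra)).
    apply deriv_contpt in Hder.
    destruct (Hder (g t0) Hg) as [del [Hdel Hx]].
    destruct (classic (exists s, E s /\ t0 - del < s)) as [[s [[Hs1 Hs2] Hs3]]|Hn].
    - assert (s <= t0) by (apply Hub; split; auto).
      destruct (Req_dec s t0). { subst; lra. }
      assert (Hs := Hx s). simpl in Hs. unfold R_dist, D_x, no_cond in Hs.
      assert (Rabs (g s - g t0) < g t0).
      { apply Hs. split. split; auto. rewrite Rabs_left1; lra. }
      apply Rabs_def2 in H3. lra.
    - assert (t0 <= t0 - del); [|lra].
      apply Hlub. intros s Hs. apply Rnot_lt_le. intro. apply Hn. eauto. }
  assert (Hlt : t0 < t) by (destruct (Req_dec t0 t); [subst; lra| lra]).
  assert (Hgp : forall s, t0 < s <= t -> 0 < g s).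
  { intros s Hs. apply Rnot_le_lt. intro. assert (s <= t0) by (apply Hub; split; lra). lra. }
  destruct (HQ t0 ltac:(lra) Hg0) as [d1 [Hd1 HQ1]].
  set (t2 := Rmin t (t0 + d1 / 2)).
  assert (Ht2 : t0 < t2 <= t /\ t2 <= t0 + d1 / 2).
  { unfold t2. split; [split|]. apply Rmin_glb_lt; lra. apply Rmin_l. apply Rmin_r. }
  assert (Hg2 := Hgp t2 ltac:(lra)).
  destruct (Hc t0 ltac:(lra) (g t2 - g t0) ltac:(lra)) as [d2 [Hd2 Hc2]].
  set (t1 := t0 + Rmin d2 (t2 - t0) / 2).
  assert (Hm1 : 0 < Rmin d2 (t2 - t0)) by (apply Rmin_glb_lt; lra).
  assert (Hm2 := Rmin_l d2 (t2 - t0)). assert (Hm3 := Rmin_r d2 (t2 - t0)).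
  assert (Ht1 : t0 < t1 < t2) by (unfold t1; lra).
  assert (Hgt1 : g t1 < g t2).
  { assert (Hx := Hc2 t1 ltac:(unfold t1; lra)). apply Rabs_def2 in Hx. lra. }
  destruct (MVT_gen g t1 t2 dg) as [c [Hc1 Hc3]].
  { rewrite Rmin_left, Rmax_right by lra. intros x Hx. apply Hd. lra. }
  { rewrite Rmin_left, Rmax_right by lra. intros x Hx. apply (deriv_contpt g x (dg x)).
    apply Hd. lra. }
  rewrite Rmin_left, Rmax_right in Hc1 by lra.
  assert (dg c <= 0).
  { apply Hneg. lra. apply Hgp. lra. apply HQ1. lra. }
  nra.
Qed.

Lemma barrier_simple (g dg : R -> R) :
  g 0 <= 0 -> (forall t0, 0 <= t0 -> rc g t0) ->
  (forall t, 0 < t -> is_derive g t (dg t)) ->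
  (forall t, 0 < t -> 0 < g t -> dg t <= 0) ->
  forall t, 0 <= t -> g t <= 0.
Proof.
  intros H0 Hc Hd Hn t Ht.
  apply (barrier g dg (t + 1) (fun _ => True)); auto; try lra.
  - intros t0 Ht0. apply Hc. lra.
  - intros t1 Ht1. apply Hd. lra.
  - intros. exists 1. split; auto; lra.
  - intros t1 Ht1 Hg _. apply Hn; lra.
Qed.

Lemma deriv_lin (f g : R -> R) t a b V df dg : is_derive f t df -> is_derive g t dg ->
  is_derive (fun s => a * f s + b * g s - V) t (a * df + b * dg).
Proof.
  intros H1 H2. auto_derive.
  - repeat split; [exists df; exact H1 | exists dg; exact H2].
  - replace (Derive (fun x => f x) t) with df by (symmetry; apply is_derive_unique; exact H1).
    replace (Derive (fun x => g x) t) with dg by (symmetry; apply is_derive_unique; exact H2).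
    ring.
Qed.

Lemma lip_lin (f g : R -> R) a b V Kf : 0 <= a -> 0 <= b -> Lip f Kf -> Lip g Kf ->
  Lip (fun s => a * f s + b * g s - V) ((a + b) * Kf).
Proof.
  intros Ha Hb Hf Hg s t.
  replace (a * f s + b * g s - V - (a * f t + b * g t - V)) with (a * (f s - f t) + b * (g s - g t)) by ring.
  eapply Rle_trans. apply Rabs_triang. rewrite !Rabs_mult, (Rabs_right a), (Rabs_right b) by lra.
  specialize (Hf s t). specialize (Hg s t).
  assert (a * Rabs (f s - f t) <= a * (Kf * Rabs (s - t))) by (apply Rmult_le_compat_l; lra).
  assert (b * Rabs (g s - g t) <= b * (Kf * Rabs (s - t))) by (apply Rmult_le_compat_l; lra).
  lra.
Qed.

Lemma lip_nonneg f K : Lip f K -> 0 <= K \/ (forall s t, f s = f t).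
Proof.
  intros H. destruct (Rle_or_lt 0 K); auto. right. intros s t.
  destruct (Req_dec s t). subst; auto.
  specialize (H s t). pose proof (Rabs_pos_lt (s - t) ltac:(lra)). pose proof (Rabs_pos (f s - f t)). nra.
Qed.


Lemma trunc_sol (ga gs lam q sigB eps : R) (beta_a beta_s : R -> R) (Ta0 Ts0 La Ls : R) :
  0 < ga -> 0 < gs -> 0 <= lam -> 0 < q -> 0 < sigB -> 0 < eps < 2 ->
  0 <= La -> 0 <= Ls ->
  (forall x y, Rabs (beta_a x - beta_a y) <= La * Rabs (x - y)) ->
  (forall x y, Rabs (beta_s x - beta_s y) <= Ls * Rabs (x - y)) ->
  (forall x, 0 <= beta_a x) -> (forall x, 0 < beta_s x) -> 0 <= Ta0 -> 0 <= Ts0 ->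
  exists (Ya Ys : R -> R) (M Fm : R), 0 <= M /\ 0 <= Fm /\ Ya 0 = Ta0 /\ Ys 0 = Ts0 /\
    Lip Ya Fm /\ Lip Ys Fm /\
    (forall t, 0 <= t -> 0 <= Ya t <= M /\ 0 <= Ys t <= M) /\
    (forall t, 0 < t -> is_derive Ya t (rhs_a lam eps sigB q beta_a (Ya t) (Ys t) / ga) /\
                        is_derive Ys t (rhs_s lam eps sigB q beta_s (Ya t) (Ys t) / gs)).
Proof.
  intros hga hgs hlam hq hsig heps HLa HLs Hba Hbs hba hbs hTa0 hTs0.
  set (c := (eps + 2) / 2).
  set (kap := (2 - eps) / 2 * sigB * eps / 2).
  set (A := q * (beta_a 0 + c * beta_s 0)).
  set (B := lam * eps / 2 + q * La + c * q * Ls).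
  set (r0 := R0 A B kap).
  set (V := ga * Ta0 + c * gs * Ts0 + (ga + c * gs) * r0).
  set (M := r0 + V / ga + V / (c * gs)).
  assert (Hc : 1 < c) by (unfold c; lra).
  assert (Hkap : 0 < kap) by (unfold kap; assert (0 < (2 - eps) / 2 * sigB) by (apply Rmult_lt_0_compat; lra);
     unfold Rdiv; repeat apply Rmult_lt_0_compat; lra).
  assert (HA : 0 <= A) by (unfold A; pose proof (hba 0); pose proof (hbs 0); apply Rmult_le_pos; nra).
  assert (HB : 0 <= B).
  { unfold B. assert (0 <= lam * eps) by nra. assert (0 <= q * La) by nra.
    assert (0 <= c * q * Ls) by (apply Rmult_le_pos; nra). lra. }
  assert (Hr0 : 1 <= r0) by (apply R0_ge1; auto).
  assert (Hcgs : 0 < c * gs) by nra.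
  assert (HV : 0 <= V).
  { unfold V. assert (0 <= ga * Ta0) by nra. assert (0 <= c * gs * Ts0) by nra. nra. }
  assert (HV1 : 0 <= V / ga) by (apply Rle_mult_inv_pos; lra).
  assert (HV2 : 0 <= V / (c * gs)) by (apply Rle_mult_inv_pos; lra).
  assert (HM : 0 <= M) by (unfold M; lra).
  set (Ga := fun x y => rhs_a lam eps sigB q beta_a (clamp M x) (clamp M y) / ga).
  set (Gs := fun x y => rhs_s lam eps sigB q beta_s (clamp M x) (clamp M y) / gs).
  assert (HG := GoodG_trunc lam eps sigB q beta_a beta_s La Ls M ga gs hlam hsig heps hq HLa HLs HM hga hgs Hba Hbs).
  fold Ga Gs in HG.
  set (Fm := (Rabs (rhs_a lam eps sigB q beta_a 0 0) + Rabs (rhs_s lam eps sigB q beta_s 0 0) +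
          2 * Lr lam sigB q La Ls M * M) * (/ ga + / gs)) in HG.
  set (Lm := Lr lam sigB q La Ls M * (/ ga + / gs) + 1) in HG.
  assert (HFm : 0 <= Fm) by (destruct HG; auto).
  destruct (picard Ga Gs Fm Lm Ta0 Ts0 HG) as [Ya [Ys [HY0a [HY0s [HLYa [HLYs HdY]]]]]].
  assert (Hnn : forall t, 0 <= t -> 0 <= Ya t /\ 0 <= Ys t).
  { intros t Ht. split.
    - assert (- Ya t <= 0); [|lra].
      apply (barrier_simple (fun t => - Ya t) (fun t => - Ga (Ya t) (Ys t))); auto.
      + rewrite HY0a; lra.
      + intros t0 _. apply (lip_rc _ Fm); auto. intros s u.
        replace (- Ya s - - Ya u) with (- (Ya s - Ya u)) by ring. rewrite Rabs_Ropp. apply HLYa.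
      + intros t1 Ht1. apply (is_derive_opp Ya). apply HdY; auto.
      + intros t1 Ht1 Hg. unfold Ga. rewrite (clamp_neg M (Ya t1)) by lra.
        destruct (clamp_range M (Ys t1) HM).
        destruct (rhs_a_0 lam eps sigB q beta_a (clamp M (Ys t1)) hlam hsig ltac:(lra) hq (hba 0) ltac:(lra)).
        assert (0 <= rhs_a lam eps sigB q beta_a 0 (clamp M (Ys t1)) / ga) by (apply Rle_mult_inv_pos; lra). lra.
    - assert (- Ys t <= 0); [|lra].
      apply (barrier_simple (fun t => - Ys t) (fun t => - Gs (Ya t) (Ys t))); auto.
      + rewrite HY0s; lra.
      + intros t0 _. apply (lip_rc _ Fm); auto. intros s u.
        replace (- Ys s - - Ys u) with (- (Ys s - Ys u)) by ring. rewrite Rabs_Ropp. apply HLYs.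
      + intros t1 Ht1. apply (is_derive_opp Ys). apply HdY; auto.
      + intros t1 Ht1 Hg. unfold Gs. rewrite (clamp_neg M (Ys t1)) by lra.
        destruct (clamp_range M (Ya t1) HM).
        pose proof (rhs_s_0 lam eps sigB q beta_s (clamp M (Ya t1)) hlam hsig ltac:(lra) hq (hbs 0) ltac:(lra)).
        assert (0 <= rhs_s lam eps sigB q beta_s (clamp M (Ya t1)) 0 / gs) by (apply Rle_mult_inv_pos; lra). lra. }
  assert (Hup : forall t, 0 <= t -> ga * Ya t + c * gs * Ys t - V <= 0).
  { apply (barrier_simple _ (fun t => ga * Ga (Ya t) (Ys t) + c * gs * Gs (Ya t) (Ys t))).
    - rewrite HY0a, HY0s. unfold V. assert (0 <= (ga + c * gs) * r0) by nra. lra.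
    - intros t0 _. apply (lip_rc _ ((ga + c * gs) * Fm)). apply Rmult_le_pos; lra.
      apply lip_lin; auto; lra.
    - intros t Ht. apply deriv_lin; apply HdY; auto.
    - intros t Ht Hg. destruct (Hnn t ltac:(lra)) as [Ha Hs].
      unfold Ga, Gs. rewrite !clamp_nonneg by auto.
      set (u := Rmin M (Ya t)). set (v := Rmin M (Ys t)).
      assert (Hu : 0 <= u) by (unfold u; apply Rmin_glb; lra).
      assert (Hv : 0 <= v) by (unfold v; apply Rmin_glb; lra).
      replace (ga * (rhs_a lam eps sigB q beta_a u v / ga) + c * gs * (rhs_s lam eps sigB q beta_s u v / gs))
        with (rhs_a lam eps sigB q beta_a u v + (eps + 2) / 2 * rhs_s lam eps sigB q beta_s u v)
        by (unfold c; field; lra).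
      eapply Rle_trans. apply (comb_bound lam eps sigB q beta_a beta_s La Ls u v); auto.
      fold c A B kap. apply quart_bound; auto. fold r0.
      destruct (Rle_or_lt (Ya t) M) as [H1|H1].
      2: { left. unfold u. rewrite Rmin_left by lra. unfold M; lra. }
      destruct (Rle_or_lt (Ys t) M) as [H2|H2].
      2: { right. unfold v. rewrite Rmin_left by lra. unfold M; lra. }
      unfold u, v. rewrite !Rmin_right by lra.
      destruct (Rle_or_lt r0 (Ya t)); auto. destruct (Rle_or_lt r0 (Ys t)); auto.
      exfalso.
      assert (ga * Ya t < ga * r0) by (apply Rmult_lt_compat_l; lra).
      assert (c * gs * Ys t < c * gs * r0) by (apply Rmult_lt_compat_l; lra).
      unfold V in Hg. assert (0 <= ga * Ta0) by nra. assert (0 <= c * gs * Ts0) by nra. nra. }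
  assert (Hrange : forall t, 0 <= t -> 0 <= Ya t <= M /\ 0 <= Ys t <= M).
  { intros t Ht. destruct (Hnn t Ht). specialize (Hup t Ht).
    assert (Ya t <= V / ga).
    { apply (Rmult_le_reg_l ga); auto. replace (ga * (V / ga)) with V by (field; lra).
      assert (0 <= c * gs * Ys t) by nra. lra. }
    assert (Ys t <= V / (c * gs)).
    { apply (Rmult_le_reg_l (c * gs)); auto. replace (c * gs * (V / (c * gs))) with V by (field; lra).
      assert (0 <= ga * Ya t) by nra. lra. }
    unfold M. lra. }
  exists Ya, Ys, M, Fm. split; [lra|]. split; [lra|]. split; [auto|]. split; [auto|].
  split; [auto|]. split; [auto|]. split; [exact Hrange|].
  intros t Ht. destruct (HdY t Ht) as [H1 H2]. destruct (Hrange t ltac:(lra)).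
  unfold Ga in H1; unfold Gs in H2. rewrite !clamp_id in H1, H2 by auto. split; auto.
Qed.


Lemma deriv_g (f1 f2 f3 f4 : R -> R) C t d1 d2 d3 d4 :
  is_derive f1 t d1 -> is_derive f2 t d2 -> is_derive f3 t d3 -> is_derive f4 t d4 ->
  is_derive (fun s => ((f1 s - f2 s) ^ 2 + (f3 s - f4 s) ^ 2) * exp (- C * s)) t
    ((2 * (f1 t - f2 t) * (d1 - d2) + 2 * (f3 t - f4 t) * (d3 - d4)) * exp (- C * t)
     + ((f1 t - f2 t) ^ 2 + (f3 t - f4 t) ^ 2) * (- C * exp (- C * t))).
Proof.
  intros H1 H2 H3 H4. auto_derive.
  - repeat split; [exists d1; exact H1 | exists d2; exact H2 | exists d3; exact H3 | exists d4; exact H4].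
  - replace (Derive (fun x => f1 x) t) with d1 by (symmetry; apply is_derive_unique; exact H1).
    replace (Derive (fun x => f2 x) t) with d2 by (symmetry; apply is_derive_unique; exact H2).
    replace (Derive (fun x => f3 x) t) with d3 by (symmetry; apply is_derive_unique; exact H3).
    replace (Derive (fun x => f4 x) t) with d4 by (symmetry; apply is_derive_unique; exact H4).
    ring.
Qed.

Lemma sq0 x : x ^ 2 = 0 -> x = 0.
Proof. intros H. apply Rsqr_0_uniq. unfold Rsqr. simpl in H. lra. Qed.

Lemma sq_small x e : Rabs x < e -> x ^ 2 < e ^ 2.
Proof. intros. rewrite <- (pow2_abs x). pose proof (Rabs_pos x). nra. Qed.

Lemma uniq (ga gs lam q sigB eps : R) (beta_a beta_s : R -> R) (Ta0 Ts0 La Ls M Fm : R)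
  (Ya Ys : R -> R) (T : R) (Ua Us : R -> R) :
  0 < ga -> 0 < gs -> 0 <= lam -> 0 < q -> 0 < sigB -> 0 < eps < 2 ->
  0 <= La -> 0 <= Ls ->
  (forall x y, Rabs (beta_a x - beta_a y) <= La * Rabs (x - y)) ->
  (forall x y, Rabs (beta_s x - beta_s y) <= Ls * Rabs (x - y)) ->
  0 <= M -> 0 <= Fm -> Ya 0 = Ta0 -> Ys 0 = Ts0 -> Lip Ya Fm -> Lip Ys Fm ->
  (forall t, 0 <= t -> 0 <= Ya t <= M /\ 0 <= Ys t <= M) ->
  (forall t, 0 < t -> is_derive Ya t (rhs_a lam eps sigB q beta_a (Ya t) (Ys t) / ga) /\
                      is_derive Ys t (rhs_s lam eps sigB q beta_s (Ya t) (Ys t) / gs)) ->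
  0 < T -> solution_on ga gs lam eps sigB q beta_a beta_s Ta0 Ts0 T Ua Us ->
  forall t, 0 <= t < T -> Ua t = Ya t /\ Us t = Ys t.
Proof.
  intros hga hgs hlam hq hsig heps HLa HLs Hba Hbs HM HFm HY0a HY0s HLYa HLYs Hrange HdY HT
    [HU0a [HU0s [HRa [HRs HdU]]]].
  set (K := M + 1).
  set (LK := Lr lam sigB q La Ls K).
  assert (HLK : 0 <= LK).
  { unfold LK, Lr. assert (0 <= K ^ 3) by (apply pow_le; unfold K; lra).
    assert (0 <= sigB * K ^ 3) by (apply Rmult_le_pos; lra).
    assert (0 <= q * (La + Ls)) by (apply Rmult_le_pos; lra). lra. }
  assert (Hi1 : 0 < / ga) by (apply Rinv_0_lt_compat; lra).
  assert (Hi2 : 0 < / gs) by (apply Rinv_0_lt_compat; lra).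
  set (L1 := LK * (/ ga + / gs)).
  assert (HL1 : 0 <= L1) by (unfold L1; apply Rmult_le_pos; lra).
  set (C := 4 * L1).
  set (D := fun s => (Ua s - Ya s) ^ 2 + (Us s - Ys s) ^ 2).
  set (g := fun s => D s * exp (- C * s)).
  set (fa := fun s => rhs_a lam eps sigB q beta_a (Ua s) (Us s) / ga - rhs_a lam eps sigB q beta_a (Ya s) (Ys s) / ga).
  set (fs := fun s => rhs_s lam eps sigB q beta_s (Ua s) (Us s) / gs - rhs_s lam eps sigB q beta_s (Ya s) (Ys s) / gs).
  set (dg := fun s => (2 * (Ua s - Ya s) * fa s + 2 * (Us s - Ys s) * fs s) * exp (- C * s)
     + D s * (- C * exp (- C * s))).
  assert (HD0 : forall s, 0 <= D s) by (intros; unfold D; pose proof (pow2_ge_0 (Ua s - Ya s)); pose proof (pow2_ge_0 (Us s - Ys s)); lra).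
  assert (Hg0 : forall s, 0 <= g s) by (intros; unfold g; pose proof (exp_pos (- C * s)); pose proof (HD0 s); nra).
  assert (Hrcu : forall t0, 0 <= t0 < T -> rc Ua t0 /\ rc Us t0).
  { intros t0 Ht0. destruct (Req_dec t0 0).
    - subst. split; apply filterlim_rc; auto.
    - destruct (HdU t0 ltac:(lra)) as [H1 H2]. split; eapply deriv_rc; eauto. }
  assert (Hbar : forall t, 0 <= t < T -> g t <= 0).
  { apply (barrier g dg T (fun s => Rabs (Ua s) <= K /\ Rabs (Us s) <= K)).
    - unfold g, D. rewrite HU0a, HU0s, HY0a, HY0s. unfold Rminus. rewrite !Rplus_opp_r. simpl. lra.
    - intros t0 Ht0. destruct (Req_dec t0 0) as [E|E].
      + subst t0. intros e He.
        set (eta := Rmin 1 (e / 8)).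
        assert (Heta : 0 < eta) by (apply Rmin_glb_lt; lra).
        assert (Heta1 : eta <= 1) by apply Rmin_l. assert (Heta2 : eta <= e / 8) by apply Rmin_r.
        destruct (Hrcu 0 ltac:(lra)) as [Hra Hrs].
        destruct (Hra eta Heta) as [d1 [Hd1 Hx1]]. destruct (Hrs eta Heta) as [d2 [Hd2 Hx2]].
        destruct (lip_rc Ya Fm 0 HFm HLYa eta Heta) as [d3 [Hd3 Hx3]].
        destruct (lip_rc Ys Fm 0 HFm HLYs eta Heta) as [d4 [Hd4 Hx4]].
        exists (Rmin (Rmin d1 d2) (Rmin d3 d4)). split.
        { apply Rmin_glb_lt; apply Rmin_glb_lt; auto. }
        intros t Ht.
        pose proof (Rmin_l (Rmin d1 d2) (Rmin d3 d4)). pose proof (Rmin_r (Rmin d1 d2) (Rmin d3 d4)).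
        pose proof (Rmin_l d1 d2). pose proof (Rmin_r d1 d2). pose proof (Rmin_l d3 d4). pose proof (Rmin_r d3 d4).
        specialize (Hx1 t ltac:(lra)). specialize (Hx2 t ltac:(lra)).
        specialize (Hx3 t ltac:(lra)). specialize (Hx4 t ltac:(lra)).
        assert (G0 : g 0 = 0).
        { unfold g, D. rewrite HU0a, HU0s, HY0a, HY0s. unfold Rminus. rewrite !Rplus_opp_r. simpl. ring. }
        rewrite G0, Rminus_0_r, Rabs_right by (apply Rle_ge; apply Hg0).
        assert (Ha : Rabs (Ua t - Ya t) < 2 * eta).
        { replace (Ua t - Ya t) with ((Ua t - Ua 0) - (Ya t - Ya 0)) by (rewrite HU0a, HY0a; ring).
          eapply Rle_lt_trans. apply Rabs_triang. rewrite Rabs_Ropp. lra. }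
        assert (Hs : Rabs (Us t - Ys t) < 2 * eta).
        { replace (Us t - Ys t) with ((Us t - Us 0) - (Ys t - Ys 0)) by (rewrite HU0s, HY0s; ring).
          eapply Rle_lt_trans. apply Rabs_triang. rewrite Rabs_Ropp. lra. }
        apply sq_small in Ha. apply sq_small in Hs.
        assert (HDt : D t < e).
        { unfold D. assert (eta * eta <= 1 * (e / 8)) by (apply Rmult_le_compat; lra).
          replace ((2 * eta) ^ 2) with (4 * (eta * eta)) in * by ring. lra. }
        unfold g. assert (exp (- C * t) <= 1).
        { rewrite <- exp_0. apply exp_mono. unfold C; nra. }
        pose proof (exp_pos (- C * t)). pose proof (HD0 t). nra.
      + apply (deriv_rc g t0 (dg t0)). unfold g, dg, D, fa, fs.
        destruct (HdU t0 ltac:(lra)). destruct (HdY t0 ltac:(lra)).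
        apply deriv_g; auto.
    - intros t Ht. unfold g, dg, D, fa, fs.
      destruct (HdU t ltac:(lra)). destruct (HdY t ltac:(lra)).
      apply deriv_g; auto.
    - intros t0 Ht0 Hgt0.
      assert (HDt0 : D t0 = 0).
      { unfold g in Hgt0. pose proof (exp_pos (- C * t0)). pose proof (HD0 t0).
        assert (D t0 <= 0); [|lra]. destruct (Rle_or_lt (D t0) 0); auto. nra. }
      assert (Ea : Ua t0 = Ya t0 /\ Us t0 = Ys t0).
      { unfold D in HDt0. pose proof (pow2_ge_0 (Ua t0 - Ya t0)). pose proof (pow2_ge_0 (Us t0 - Ys t0)).
        assert ((Ua t0 - Ya t0) ^ 2 = 0) by lra. assert ((Us t0 - Ys t0) ^ 2 = 0) by lra.
        apply sq0 in H1. apply sq0 in H2. lra. }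
      destruct (Hrcu t0 Ht0) as [Hra Hrs].
      destruct (Hra 1 ltac:(lra)) as [d1 [Hd1 Hx1]]. destruct (Hrs 1 ltac:(lra)) as [d2 [Hd2 Hx2]].
      exists (Rmin d1 d2). split. apply Rmin_glb_lt; auto.
      intros t Ht. pose proof (Rmin_l d1 d2). pose proof (Rmin_r d1 d2).
      specialize (Hx1 t ltac:(lra)). specialize (Hx2 t ltac:(lra)).
      destruct (Hrange t0 ltac:(lra)) as [[Ha1 Ha2] [Hs1 Hs2]].
      destruct Ea as [Ea Es].
      apply Rabs_def2 in Hx1. apply Rabs_def2 in Hx2.
      unfold K. split; apply Rabs_le; lra.
    - intros t Ht Hgt [HQa HQs].
      destruct (Hrange t ltac:(lra)) as [[Ha1 Ha2] [Hs1 Hs2]].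
      assert (HYa : Rabs (Ya t) <= K) by (rewrite Rabs_right; unfold K; lra).
      assert (HYs : Rabs (Ys t) <= K) by (rewrite Rabs_right; unfold K; lra).
      destruct (rhs_lip lam eps sigB q beta_a beta_s La Ls K (Ua t) (Us t) (Ya t) (Ys t) hlam hsig heps hq HLa HLs
                  ltac:(unfold K; lra) Hba Hbs HQa HQs HYa HYs) as [H1 H2].
      fold LK in H1, H2.
      set (a := Rabs (Ua t - Ya t)) in *. set (b := Rabs (Us t - Ys t)) in *.
      assert (Ha0 : 0 <= a) by apply Rabs_pos. assert (Hb0 : 0 <= b) by apply Rabs_pos.
      assert (Hfa : Rabs (fa t) <= L1 * (a + b)).
      { unfold fa. replace (rhs_a lam eps sigB q beta_a (Ua t) (Us t) / ga - rhs_a lam eps sigB q beta_a (Ya t) (Ys t) / ga)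
          with ((rhs_a lam eps sigB q beta_a (Ua t) (Us t) - rhs_a lam eps sigB q beta_a (Ya t) (Ys t)) / ga) by (field; lra).
        rewrite Rabs_div_pos by lra. unfold Rdiv, L1.
        assert (0 <= LK * (a + b) * / gs) by (apply Rmult_le_pos; [apply Rmult_le_pos|]; lra).
        assert (Rabs (rhs_a lam eps sigB q beta_a (Ua t) (Us t) - rhs_a lam eps sigB q beta_a (Ya t) (Ys t)) * / ga <= LK * (a + b) * / ga)
          by (apply Rmult_le_compat_r; lra).
        nra. }
      assert (Hfs : Rabs (fs t) <= L1 * (a + b)).
      { unfold fs. replace (rhs_s lam eps sigB q beta_s (Ua t) (Us t) / gs - rhs_s lam eps sigB q beta_s (Ya t) (Ys t) / gs)
          with ((rhs_s lam eps sigB q beta_s (Ua t) (Us t) - rhs_s lam eps sigB q beta_s (Ya t) (Ys t)) / gs) by (field; lra).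
        rewrite Rabs_div_pos by lra. unfold Rdiv, L1.
        assert (0 <= LK * (a + b) * / ga) by (apply Rmult_le_pos; [apply Rmult_le_pos|]; lra).
        assert (Rabs (rhs_s lam eps sigB q beta_s (Ua t) (Us t) - rhs_s lam eps sigB q beta_s (Ya t) (Ys t)) * / gs <= LK * (a + b) * / gs)
          by (apply Rmult_le_compat_r; lra).
        nra. }
      assert (P1 : (Ua t - Ya t) * fa t <= a * Rabs (fa t)) by (unfold a; rewrite <- Rabs_mult; apply Rle_abs).
      assert (P2 : (Us t - Ys t) * fs t <= b * Rabs (fs t)) by (unfold b; rewrite <- Rabs_mult; apply Rle_abs).
      assert (Q1 : a * Rabs (fa t) <= a * (L1 * (a + b))) by (apply Rmult_le_compat_l; lra).
      assert (Q2 : b * Rabs (fs t) <= b * (L1 * (a + b))) by (apply Rmult_le_compat_l; lra).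
      assert (Ed : D t = a ^ 2 + b ^ 2) by (unfold D, a, b; rewrite !pow2_abs; ring).
      assert (S1 : 2 * (Ua t - Ya t) * fa t + 2 * (Us t - Ys t) * fs t <= C * D t).
      { rewrite Ed. unfold C. assert (0 <= L1 * (a - b) ^ 2) by (apply Rmult_le_pos; [lra|apply pow2_ge_0]). nra. }
      unfold dg. pose proof (exp_pos (- C * t)). nra. }
  intros t Ht. specialize (Hbar t Ht). unfold g in Hbar.
  pose proof (exp_pos (- C * t)). pose proof (HD0 t).
  assert (HDt : D t = 0) by (destruct (Rle_or_lt (D t) 0); [lra|nra]).
  unfold D in HDt. pose proof (pow2_ge_0 (Ua t - Ya t)). pose proof (pow2_ge_0 (Us t - Ys t)).
  assert (E1 : (Ua t - Ya t) ^ 2 = 0) by lra. assert (E2 : (Us t - Ys t) ^ 2 = 0) by lra.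
  apply sq0 in E1. apply sq0 in E2. lra.
Qed.


Lemma at_right_le x : filter_le (at_right x) (locally x).
Proof. intros P HP. unfold at_right, within. eapply filter_imp; [|exact HP]. intros; auto. Qed.

Theorem proposition2p1
  (ga gs lam q sigB eps : R) (beta_a beta_s : R -> R) (Ta0 Ts0 : R)
  (hga : 0 < ga) (hgs : 0 < gs) (hlam : 0 <= lam) (hq : 0 < q)
  (hsig : 0 < sigB) (heps : 0 < eps < 2)
  (hLa : lipschitz beta_a) (hLs : lipschitz beta_s)
  (hba : forall x, 0 <= beta_a x) (hbs : forall x, 0 < beta_s x)
  (hTa0 : 0 <= Ta0) (hTs0 : 0 <= Ts0) :
  exists Ta Ts : R -> R,
    (forall T, 0 < T -> solution_on ga gs lam eps sigB q beta_a beta_s Ta0 Ts0 T Ta Ts) /\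
    (forall T (Ua Us : R -> R), 0 < T ->
       solution_on ga gs lam eps sigB q beta_a beta_s Ta0 Ts0 T Ua Us ->
       forall t, 0 <= t < T -> Ua t = Ta t /\ Us t = Ts t) /\
    (exists M, forall t, 0 <= t -> Rabs (Ta t) <= M /\ Rabs (Ts t) <= M) /\
    (forall t, 0 < t -> 0 < Ta t /\ 0 < Ts t).
Proof.
  destruct hLa as [La [HLa0 HLa]]. destruct hLs as [Ls [HLs0 HLs]].
  destruct (trunc_sol ga gs lam q sigB eps beta_a beta_s Ta0 Ts0 La Ls hga hgs hlam hq hsig heps
              HLa0 HLs0 HLa HLs hba hbs hTa0 hTs0)
    as [Ya [Ys [M [Fm [HM [HFm [HY0a [HY0s [HLYa [HLYs [Hrange HdY]]]]]]]]]]].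
  assert (Hps : forall t, 0 < t -> 0 < Ys t).
  { intros t Ht. destruct (Hrange t ltac:(lra)) as [[Ha0 _] [[Hs0|E] _]]; auto. exfalso.
    apply (deriv_pos_contra Ys t (rhs_s lam eps sigB q beta_s (Ya t) (Ys t) / gs)); auto.
    - apply HdY; auto.
    - rewrite <- E. apply Rdiv_lt_0_compat; auto. apply rhs_s_0; auto; lra.
    - intros s Hs. apply Hrange; lra. }
  assert (Hpa : forall t, 0 < t -> 0 < Ya t).
  { intros t Ht. destruct (Hrange t ltac:(lra)) as [[[Ha0|E] _] _]; auto. exfalso.
    apply (deriv_pos_contra Ya t (rhs_a lam eps sigB q beta_a (Ya t) (Ys t) / ga)); auto.
    - apply HdY; auto.
    - rewrite <- E. apply Rdiv_lt_0_compat; auto.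
      destruct (rhs_a_0 lam eps sigB q beta_a (Ys t) hlam hsig ltac:(lra) hq (hba 0) ltac:(left; apply Hps; auto)) as [_ Hst].
      apply Hst, Hps; auto.
    - intros s Hs. apply Hrange; lra. }
  exists Ya, Ys. split; [|split; [|split]].
  - intros T HT. unfold solution_on. split; [auto|]. split; [auto|].
    split; [|split].
    + apply (filterlim_filter_le_1 (F := locally 0)). apply at_right_le.
      exact (lip_cont Ya Fm 0 HLYa).
    + apply (filterlim_filter_le_1 (F := locally 0)). apply at_right_le.
      exact (lip_cont Ys Fm 0 HLYs).
    + intros t Ht. apply HdY. lra.
  - intros T Ua Us HT Hsol t Ht.
    exact (uniq ga gs lam q sigB eps beta_a beta_s Ta0 Ts0 La Ls M Fm Ya Ys T Ua Us hga hgs hlam hq hsig heps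
             HLa0 HLs0 HLa HLs HM HFm HY0a HY0s HLYa HLYs Hrange HdY HT Hsol t Ht).
  - exists M. intros t Ht. destruct (Hrange t Ht) as [[H1 H2] [H3 H4]].
    rewrite !Rabs_right by lra. lra.
  - intros t Ht. split; auto.
Qed.
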